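(* Fix $A,B\in\mathbb R$ and $T>0$. There is $C=C(A,B,T)$, not depending on $\epsilon=N^{-1}$, such that for all sufficiently large $N$, all $0\le s<t\le\epsilon^{-2}T$, all $x,y\in\{0,\dots,N\}$ and all $v\in[0,1]$, $$|\mathbf p_t^R(x,y)-\mathbf p_s^R(x,y)|\le C\,(1\wedge s^{-1/2-v})\,(t-s)^v.$$
   Context: For $N\ge1$, $\epsilon=1/N$, $\mu_A=1-A\epsilon$, $\mu_B=1-B\epsilon$, $\Delta_{A,B}$ is the $(N+1)\times(N+1)$ tridiagonal matrix indexed by $\{0,\dots,N\}$ with off-diagonal entries $1$, diagonal entries $-2$ except the $(0,0)$ entry $\mu_A-2$ and the $(N,N)$ entry $\mu_B-2$. The bounded-interval Robin heat kernel is $\mathbf p_t^R(x,y)=\big(\exp(\tfrac t2\Delta_{A,B})\big)_{x,y}$ for $x,y\in\{0,\dots,N\}$, $t\ge0$. *)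

(* Defs.v *)
From Stdlib Require Import Reals Lra Lia Classical ClassicalEpsilon.
Open Scope R_scope.

Definition eps (N : nat) : R := / INR N.

(* The (N+1)x(N+1) tridiagonal matrix Delta_{A,B}, indexed by {0..N}
   (entries outside this range are irrelevant; set to 0). *)
Definition Delta (A B : R) (N : nat) (i j : nat) : R :=
  if Nat.ltb N i then 0 else if Nat.ltb N j then 0 else
  if Nat.eqb i j then
    (if Nat.eqb i 0 then (1 - A * eps N) - 2
     else if Nat.eqb i N then (1 - B * eps N) - 2
     else -2)
  else if orb (Nat.eqb (S i) j) (Nat.eqb i (S j)) then 1 else 0.

Definition matmul (N : nat) (M1 M2 : nat -> nat -> R) (i j : nat) : R :=
  sum_f_R0 (fun k => M1 i k * M2 k j) N.

Definition idmat (i j : nat) : R := if Nat.eqb i j then 1 else 0.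

Fixpoint matpow (N : nat) (M : nat -> nat -> R) (k : nat) : nat -> nat -> R :=
  match k with
  | O => idmat
  | S k' => matmul N (matpow N M k') M
  end.

Definition expPartial (A B : R) (N : nat) (t : R) (x y : nat) (n : nat) : R :=
  sum_f_R0 (fun k => (t / 2) ^ k / INR (Factorial.fact k) * matpow N (Delta A B N) k x y) n.

(* Robin heat kernel p^R_t(x,y) = (exp(t/2 Delta_{A,B}))_{x,y}, the limit of the series. *)
Definition pR (A B : R) (N : nat) (t : R) (x y : nat) : R :=
  proj1_sig (constructive_indefinite_description
    (fun l => Un_cv (expPartial A B N t x y) l \/
              (~ (exists l', Un_cv (expPartial A B N t x y) l') /\ l = 0))
    (match classic (exists l', Un_cv (expPartial A B N t x y) l') with
     | or_introl H => match H with ex_intro _ l Hl => ex_intro _ l (or_introl Hl) end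
     | or_intror H => ex_intro _ 0 (or_intror (conj H eq_refl))
     end)).

(* 1 /\ s^{-1/2-v}, with the convention that it equals 1 at s = 0 *)
Definition minfac (s v : R) : R :=
  if Req_EM_T s 0 then 1 else Rmin 1 (Rpower s (-(1/2) - v)).

(* Main.v *)
Require Import Defs.
From Stdlib Require Import Reals Lra Lia Psatz ZArith.
From Coquelicot Require Import Coquelicot.
Require Import Defs.
Open Scope R_scope.

Fixpoint sm (f : nat -> R) (n : nat) : R :=
  match n with O => 0 | S n => sm f n + f n end.

Lemma sum_f_sm f n : sum_f_R0 f n = sm f (S n).
Proof. induction n; simpl; [lra|]. rewrite IHn. simpl. lra. Qed.

Lemma sm_ext f g n : (forall k, (k < n)%nat -> f k = g k) -> sm f n = sm g n.
Proof. induction n; intros H; simpl; [lra|]. rewrite IHn by (intros; apply H; lia). rewrite H by lia; lra. Qed.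

Lemma sm_plus f g n : sm (fun k => f k + g k) n = sm f n + sm g n.
Proof. induction n; simpl; lra. Qed.

Lemma sm_minus f g n : sm (fun k => f k - g k) n = sm f n - sm g n.
Proof. induction n; simpl; lra. Qed.

Lemma sm_scal c f n : sm (fun k => c * f k) n = c * sm f n.
Proof. induction n; simpl; [lra|]. rewrite IHn; lra. Qed.

Lemma sm_le f g n : (forall k, (k < n)%nat -> f k <= g k) -> sm f n <= sm g n.
Proof. induction n; intros H; simpl; [lra|]. assert (sm f n <= sm g n) by (apply IHn; intros; apply H; lia).
  assert (f n <= g n) by (apply H; lia). lra. Qed.

Lemma sm_nonneg f n : (forall k, (k < n)%nat -> 0 <= f k) -> 0 <= sm f n.
Proof. intros H. replace 0 with (sm (fun _ => 0) n). apply sm_le; auto.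
  induction n; simpl; auto. rewrite IHn; [lra|]. intros; apply H; lia. Qed.

Lemma sm_shift f n : sm f (S n) = f O + sm (fun k => f (S k)) n.
Proof. induction n; simpl in *; [lra|]. rewrite IHn. lra. Qed.

Lemma sm_split f a n : sm f (a + n) = sm f a + sm (fun k => f (a+k)%nat) n.
Proof. induction n; simpl. rewrite Nat.add_0_r; lra. rewrite Nat.add_succ_r. simpl. rewrite IHn; lra. Qed.

Lemma sm_swap f n m : sm (fun i => sm (fun j => f i j) m) n = sm (fun j => sm (fun i => f i j) n) m.
Proof. induction n; simpl.
  - induction m; simpl; lra.
  - rewrite IHn. rewrite <- sm_plus. reflexivity. Qed.

Lemma sm_delta u j n : sm (fun z => u z * (if Nat.eqb z j then 1 else 0)) n = if Nat.ltb j n then u j else 0.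
Proof. induction n; simpl. destruct j; reflexivity.
  rewrite IHn. destruct (Nat.eqb_spec n j); destruct (Nat.ltb_spec j n); destruct (Nat.ltb_spec j (S n)); subst; try lia; lra. Qed.

Lemma sm_const c n : sm (fun _ => c) n = INR n * c.
Proof. induction n. simpl; lra. cbn [sm]. rewrite IHn, S_INR. lra. Qed.

Lemma sm_sq_nonneg f n : 0 <= sm (fun k => f k ^ 2) n.
Proof. apply sm_nonneg; intros; nra. Qed.

Lemma cs f n : (sm f n)^2 <= INR n * sm (fun k => f k ^2) n.
Proof. induction n. simpl; lra. cbn [sm]. rewrite S_INR.
  destruct (Nat.eq_dec n 0). subst; simpl; lra.
  assert (Hn: 0 < INR n) by (apply lt_0_INR; lia).
  set (S0 := sm f n) in *. set (T0 := sm (fun k => f k ^ 2) n) in *.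
  assert (2 * S0 * f n <= S0^2 / INR n + INR n * f n ^2).
  { assert (0 <= (S0 / INR n - f n)^2 * INR n) by (apply Rmult_le_pos; [apply pow2_ge_0|lra]).
    replace ((S0 / INR n - f n)^2 * INR n) with (S0^2/INR n - 2*S0*f n + INR n * f n^2) in H by (field; lra). lra. }
  assert (S0^2 / INR n <= T0). { apply Rmult_le_reg_l with (INR n); auto. field_simplify; [|lra]. lra. }
  nra. Qed.

Lemma sm_sub_le g s m n : (forall k, (k < n)%nat -> 0 <= g k) -> (s + m <= n)%nat ->
  sm (fun k => g (s+k)%nat) m <= sm g n.
Proof. intros H Hle. replace n with ((s+m) + (n - (s+m)))%nat by lia.
  rewrite sm_split, sm_split. assert (0 <= sm g s) by (apply sm_nonneg; intros; apply H; lia).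
  assert (0 <= sm (fun k => g (s + m + k)%nat) (n - (s + m))) by (apply sm_nonneg; intros; apply H; lia). lra. Qed.

Definition dl (z j : nat) : R := if Nat.eqb z j then 1 else 0.

Lemma Delta_sym A B N z y : Delta A B N z y = Delta A B N y z.
Proof. unfold Delta.
  repeat match goal with |- context [Nat.eqb ?a ?b] => destruct (Nat.eqb_spec a b) end;
  repeat match goal with |- context [Nat.ltb ?a ?b] => destruct (Nat.ltb_spec a b) end;
  simpl; subst; try lia; try lra. Qed.

Lemma Delta_decomp A B N z y : (1 <= N)%nat -> (z <= N)%nat -> (y <= N)%nat ->
  Delta A B N z y = -2 * dl z y + dl z (S y) + (if Nat.eqb y 0 then 0 else dl z (pred y))
     + (if Nat.eqb y 0 then (1 - A * eps N) * dl z 0 else 0)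
     + (if Nat.eqb y N then (1 - B * eps N) * dl z N else 0).
Proof. intros H1 Hz Hy. unfold Delta, dl.
  destruct (Nat.ltb_spec N z); [lia|]. destruct (Nat.ltb_spec N y); [lia|].
  repeat match goal with |- context [Nat.eqb ?a ?b] => destruct (Nat.eqb_spec a b) end;
  simpl; subst; try lia; try lra. Qed.

Definition Mv (N : nat) (M : nat -> nat -> R) (u : nat -> R) (y : nat) : R :=
  sm (fun z => u z * M z y) (S N).
Definition Ev (N : nat) (u : nat -> R) : R := sm (fun z => u z ^ 2) (S N).
Definition Dv (N : nat) (u : nat -> R) : R := sm (fun k => (u (S k) - u k) ^ 2) N.
Definition Bf (N : nat) (M : nat -> nat -> R) (u : nat -> R) : R := sm (fun y => u y * Mv N M u y) (S N).

Lemma sm_dl u j n : sm (fun z => u z * dl z j) n = if Nat.ltb j n then u j else 0.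
Proof. apply sm_delta. Qed.

Lemma Mv_Delta A B N u y : (1 <= N)%nat -> (y <= N)%nat ->
  Mv N (Delta A B N) u y = -2 * u y + (if Nat.ltb y N then u (S y) else 0)
     + (if Nat.eqb y 0 then 0 else u (pred y))
     + (if Nat.eqb y 0 then (1 - A * eps N) * u O else 0)
     + (if Nat.eqb y N then (1 - B * eps N) * u N else 0).
Proof. intros H1 Hy. unfold Mv.
  rewrite (sm_ext _ (fun z => -2 * (u z * dl z y) + u z * dl z (S y) + (if Nat.eqb y 0 then 0 else u z * dl z (pred y))
     + (if Nat.eqb y 0 then (1 - A * eps N) * (u z * dl z 0) else 0)
     + (if Nat.eqb y N then (1 - B * eps N) * (u z * dl z N) else 0))).
  2:{ intros z Hz. rewrite Delta_decomp by lia. destruct (Nat.eqb y 0); destruct (Nat.eqb y N); ring. }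
  rewrite !sm_plus, sm_scal, !sm_dl.
  destruct (Nat.eqb_spec y 0); destruct (Nat.eqb_spec y N).
  all: rewrite ?sm_scal, ?sm_dl.
  all: try (replace (sm (fun _ : nat => 0) (S N)) with 0 by (rewrite sm_const; lra)).
  all: repeat match goal with |- context [Nat.ltb ?a ?b] => destruct (Nat.ltb_spec a b) end; try lia; try lra.
Qed.

Lemma Bf_Delta A B N u : (1 <= N)%nat ->
  Bf N (Delta A B N) u = - Dv N u - A * eps N * u O ^ 2 - B * eps N * u N ^ 2.
Proof. intros H1. unfold Bf.
  rewrite (sm_ext _ (fun y => -2 * u y ^ 2 + (if Nat.ltb y N then u y * u (S y) else 0)
     + (if Nat.eqb y 0 then 0 else u y * u (pred y))
     + (if Nat.eqb y 0 then (1 - A * eps N) * u O ^ 2 else 0)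
     + (if Nat.eqb y N then (1 - B * eps N) * u N ^ 2 else 0))).
  2:{ intros y Hy. rewrite Mv_Delta by lia.
      destruct (Nat.eqb_spec y 0); destruct (Nat.eqb_spec y N); destruct (Nat.ltb_spec y N); subst; try lia; ring. }
  rewrite !sm_plus, sm_scal.
  assert (E1: sm (fun y => if Nat.ltb y N then u y * u (S y) else 0) (S N) = sm (fun k => u k * u (S k)) N).
  { cbn [sm]. destruct (Nat.ltb_spec N N); [lia|]. rewrite Rplus_0_r. apply sm_ext. intros k Hk.
    destruct (Nat.ltb_spec k N); [reflexivity|lia]. }
  assert (E2: sm (fun y => if Nat.eqb y 0 then 0 else u y * u (pred y)) (S N) = sm (fun k => u k * u (S k)) N).
  { rewrite sm_shift. simpl. rewrite Rplus_0_l. apply sm_ext. intros; ring. }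
  assert (E3: sm (fun y => if Nat.eqb y 0 then (1 - A * eps N) * u O ^ 2 else 0) (S N) = (1 - A * eps N) * u O ^ 2).
  { rewrite sm_shift. simpl. rewrite sm_const. ring. }
  assert (E4: sm (fun y => if Nat.eqb y N then (1 - B * eps N) * u N ^ 2 else 0) (S N) = (1 - B * eps N) * u N ^ 2).
  { cbn [sm]. rewrite Nat.eqb_refl. rewrite (sm_ext _ (fun _ => 0)). rewrite sm_const. ring.
    intros k Hk. destruct (Nat.eqb_spec k N); [lia|reflexivity]. }
  rewrite E1, E2, E3, E4.
  unfold Dv. rewrite (sm_ext (fun k => (u (S k) - u k) ^ 2) (fun k => u (S k) ^ 2 + u k ^ 2 - 2 * (u k * u (S k)))) by (intros; ring).
  rewrite sm_minus, sm_plus, sm_scal.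
  assert (F1: sm (fun k => u (S k) ^ 2) N = sm (fun z => u z ^ 2) (S N) - u O ^ 2) by (rewrite (sm_shift (fun z => u z ^ 2)); cbv beta; ring).
  assert (F2: sm (fun k => u k ^ 2) N = sm (fun z => u z ^ 2) (S N) - u N ^ 2) by (cbn [sm]; ring).
  rewrite F1, F2. ring. Qed.

Lemma ceil_nat x : 0 <= x -> exists m : nat, x < INR m <= x + 1.
Proof. intros Hx. destruct (archimed x) as [H1 H2].
  assert (Hz: (0 <= up x)%Z). { apply le_IZR. lra. }
  exists (Z.to_nat (up x)). rewrite INR_IZR_INZ, Z2Nat.id by auto. lra. Qed.

Definition L1 (N : nat) (u : nat -> R) : R := sm (fun z => Rabs (u z)) (S N).

Lemma telesc u a n : u (a + n)%nat - u a = sm (fun k => u (S (a + k)) - u (a + k)%nat) n.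
Proof. induction n; simpl. rewrite Nat.add_0_r; ring. rewrite <- IHn. rewrite Nat.add_succ_r. ring. Qed.

Lemma path_le N u a b : (a <= b)%nat -> (b <= N)%nat -> (u b - u a) ^ 2 <= INR (b - a) * Dv N u.
Proof. intros Hab HbN. replace b with (a + (b - a))%nat at 1 by lia. rewrite telesc.
  eapply Rle_trans. apply cs. apply Rmult_le_compat_l. apply pos_INR.
  unfold Dv. apply (sm_sub_le (fun k => (u (S k) - u k) ^ 2) a (b - a) N). intros; apply pow2_ge_0. lia. Qed.

Lemma Dv_nonneg N u : 0 <= Dv N u.
Proof. apply sm_nonneg; intros; apply pow2_ge_0. Qed.
Lemma Ev_nonneg N u : 0 <= Ev N u.
Proof. apply sm_nonneg; intros; apply pow2_ge_0. Qed.
Lemma L1_nonneg N u : 0 <= L1 N u.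
Proof. apply sm_nonneg; intros; apply Rabs_pos. Qed.

Lemma pair_le N u i j m : (i <= N)%nat -> (j <= N)%nat -> (i - j <= m)%nat -> (j - i <= m)%nat ->
  (u i - u j) ^ 2 <= INR m * Dv N u.
Proof. intros Hi Hj H1 H2. pose proof (Dv_nonneg N u).
  destruct (Nat.le_ge_cases i j).
  - replace ((u i - u j)^2) with ((u j - u i)^2) by ring. eapply Rle_trans. apply path_le; eauto.
    apply Rmult_le_compat_r; auto. apply le_INR; lia.
  - eapply Rle_trans. apply path_le; eauto. apply Rmult_le_compat_r; auto. apply le_INR; lia. Qed.

Lemma window_L2 N u i m : (i <= N)%nat -> (1 <= m)%nat -> (m <= S N)%nat ->
  INR m * u i ^ 2 <= 2 * Ev N u + 2 * INR m ^ 2 * Dv N u.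
Proof. intros Hi Hm1 Hm2. set (s := Nat.min i (S N - m)).
  assert (H: sm (fun _ => u i ^ 2) m <= sm (fun k => 2 * u (s + k)%nat ^ 2 + 2 * (INR m * Dv N u)) m).
  { apply sm_le. intros k Hk. assert (HH: (u i - u (s+k)%nat)^2 <= INR m * Dv N u) by (apply pair_le; unfold s; lia).
    pose proof (pow2_ge_0 (u i - 2 * u (s+k)%nat)). nra. }
  rewrite sm_const, sm_plus, sm_scal, sm_const in H.
  assert (sm (fun k => u (s + k)%nat ^ 2) m <= Ev N u).
  { unfold Ev. apply (sm_sub_le (fun z => u z ^ 2)). intros; apply pow2_ge_0. unfold s; lia. }
  nra. Qed.

Lemma abs_le_sqrt x y : x ^ 2 <= y -> Rabs x <= sqrt y.
Proof. intros H. rewrite <- sqrt_Rsqr_abs. apply sqrt_le_1_alt. rewrite Rsqr_pow2; auto. Qed.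

Lemma window_L1 N u i m : (i <= N)%nat -> (1 <= m)%nat -> (m <= S N)%nat ->
  INR m * Rabs (u i) <= L1 N u + INR m * sqrt (INR m * Dv N u).
Proof. intros Hi Hm1 Hm2. set (s := Nat.min i (S N - m)).
  assert (H: sm (fun _ => Rabs (u i)) m <= sm (fun k => Rabs (u (s + k)%nat) + sqrt (INR m * Dv N u)) m).
  { apply sm_le. intros k Hk. assert (HH: (u i - u (s+k)%nat)^2 <= INR m * Dv N u) by (apply pair_le; unfold s; lia).
    apply abs_le_sqrt in HH. pose proof (Rabs_triang_inv (u i) (u (s+k)%nat)). lra. }
  rewrite sm_const, sm_plus, sm_const in H.
  assert (sm (fun k => Rabs (u (s + k)%nat)) m <= L1 N u).
  { unfold L1. apply (sm_sub_le (fun z => Rabs (u z))). intros; apply Rabs_pos. unfold s; lia. }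
  lra. Qed.

Lemma nash_basic N u m : (1 <= m)%nat -> (m <= S N)%nat ->
  Ev N u <= L1 N u * (L1 N u / INR m + sqrt (INR m * Dv N u)).
Proof. intros Hm1 Hm2. assert (Hm: 0 < INR m) by (apply lt_0_INR; lia).
  assert (Hb: forall i, (i <= N)%nat -> Rabs (u i) <= L1 N u / INR m + sqrt (INR m * Dv N u)).
  { intros i Hi. pose proof (window_L1 N u i m Hi Hm1 Hm2).
    apply Rmult_le_reg_l with (INR m); auto.
    replace (INR m * (L1 N u / INR m + sqrt (INR m * Dv N u))) with (L1 N u + INR m * sqrt (INR m * Dv N u)) by (field; lra). lra. }
  set (b := L1 N u / INR m + sqrt (INR m * Dv N u)) in *.
  unfold Ev, L1. rewrite Rmult_comm, <- sm_scal. apply sm_le. intros k Hk.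
  rewrite <- pow2_abs. pose proof (Hb k ltac:(lia)). pose proof (Rabs_pos (u k)). simpl. nra. Qed.

Lemma bdry_one N u a Kk Mm NN i : 0 < Mm -> 0 < NN -> 0 < Kk -> 8 * Rabs a + 1 <= Kk ->
  Kk * Mm <= NN -> NN <= 2 * Kk * Mm ->
  Mm * u i ^ 2 <= 2 * Ev N u + 2 * Mm ^ 2 * Dv N u ->
  Rabs a * / NN * u i ^ 2 <= 4 * Rabs a * Kk * (/ NN) ^ 2 * Ev N u + / 4 * Dv N u.
Proof. intros HM HN HK HKa H1 H2 Hw. pose proof (Dv_nonneg N u). pose proof (Ev_nonneg N u).
  pose proof (Rabs_pos a).
  assert (Hu: u i ^ 2 <= 2 * Ev N u / Mm + 2 * Mm * Dv N u).
  { apply Rmult_le_reg_l with Mm; auto. replace (Mm * (2 * Ev N u / Mm + 2 * Mm * Dv N u)) with (2 * Ev N u + 2 * Mm ^ 2 * Dv N u) by (field; lra). lra. }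
  assert (Hi1: / Mm <= 2 * Kk / NN). { apply Rmult_le_reg_l with (Mm * NN). nra.
     replace (Mm * NN * / Mm) with NN by (field; lra). replace (Mm * NN * (2 * Kk / NN)) with (2 * Kk * Mm) by (field; lra). lra. }
  assert (Hi2: Rabs a * / NN * (2 * Mm) <= / 4).
  { apply Rmult_le_reg_l with (4 * NN). nra.
    replace (4 * NN * (Rabs a * / NN * (2 * Mm))) with (8 * Rabs a * Mm) by (field; lra).
    replace (4 * NN * / 4) with NN by field. nra. }
  assert (Hi3: Rabs a * / NN * (2 * Ev N u / Mm) <= 4 * Rabs a * Kk * (/ NN) ^ 2 * Ev N u).
  { unfold Rdiv. replace (Rabs a * / NN * (2 * Ev N u * / Mm)) with (2 * Rabs a * / NN * Ev N u * / Mm) by ring.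
    replace (4 * Rabs a * Kk * (/ NN) ^ 2 * Ev N u) with (2 * Rabs a * / NN * Ev N u * (2 * Kk / NN)) by (field; lra).
    apply Rmult_le_compat_l; auto. assert (0 < / NN) by (apply Rinv_0_lt_compat; lra). repeat apply Rmult_le_pos; lra. }
  assert (Hp: 0 <= Rabs a * / NN). { assert (0 < / NN) by (apply Rinv_0_lt_compat; lra). nra. }
  assert (Rabs a * / NN * u i ^ 2 <= Rabs a * / NN * (2 * Ev N u / Mm + 2 * Mm * Dv N u)) by (apply Rmult_le_compat_l; auto).
  assert (Rabs a * / NN * (2 * Mm * Dv N u) <= / 4 * Dv N u).
  { replace (Rabs a * / NN * (2 * Mm * Dv N u)) with (Rabs a * / NN * (2 * Mm) * Dv N u) by ring.
    apply Rmult_le_compat_r; auto. }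
  lra. Qed.

Lemma coercive A B : exists c : R, exists N1 : nat, 0 < c /\
  forall N, (N1 <= N)%nat -> (1 <= N)%nat -> forall u,
    / 2 * Dv N u - c * (eps N) ^ 2 * Ev N u <= - Bf N (Delta A B N) u.
Proof. set (K := Rabs A + Rabs B).
  assert (HK0: 0 <= K) by (unfold K; pose proof (Rabs_pos A); pose proof (Rabs_pos B); lra).
  destruct (ceil_nat (8 * K + 1)) as [k [Hk1 Hk2]]; [lra|].
  exists (4 * K * INR k + 1), (2 * k)%nat. split.
  { assert (0 <= INR k) by apply pos_INR. nra. }
  intros N HN1 HN u.
  assert (Hk0: (k <> 0)%nat). { intro; subst; simpl in Hk1; lra. }
  set (m := (N / k)%nat).
  assert (Hm1: (k * m <= N)%nat) by (apply Nat.Div0.mul_div_le).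
  assert (Hm2: (N < k * S m)%nat) by (apply Nat.mul_succ_div_gt; auto).
  assert (Hm3: (1 <= m)%nat) by nia.
  assert (R1: INR k * INR m <= INR N) by (rewrite <- mult_INR; apply le_INR; auto).
  assert (R2: INR N <= 2 * INR k * INR m).
  { assert (INR N <= INR k * INR (S m)) by (rewrite <- mult_INR; apply le_INR; lia).
    rewrite S_INR in H. assert (1 <= INR m) by (apply (le_INR 1); auto). nra. }
  assert (HNp: 0 < INR N) by (apply lt_0_INR; lia).
  assert (HMp: 0 < INR m) by (apply lt_0_INR; lia).
  assert (HKp: 0 < INR k) by lra.
  assert (W0 := window_L2 N u 0 m ltac:(lia) Hm3 ltac:(nia)).
  assert (WN := window_L2 N u N m ltac:(lia) Hm3 ltac:(nia)).
  assert (HA: 8 * Rabs A + 1 <= INR k) by (unfold K in Hk1; pose proof (Rabs_pos B); lra).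
  assert (HB: 8 * Rabs B + 1 <= INR k) by (unfold K in Hk1; pose proof (Rabs_pos A); lra).
  pose proof (bdry_one N u A (INR k) (INR m) (INR N) 0 HMp HNp HKp HA R1 R2 W0) as B0.
  pose proof (bdry_one N u B (INR k) (INR m) (INR N) N HMp HNp HKp HB R1 R2 WN) as BN.
  rewrite Bf_Delta by auto. unfold eps.
  assert (A * / INR N * u 0%nat ^ 2 >= - (Rabs A * / INR N * u 0%nat ^ 2)).
  { assert (0 <= / INR N * u 0%nat ^ 2) by (apply Rmult_le_pos; [left; apply Rinv_0_lt_compat; lra| apply pow2_ge_0]).
    pose proof (Rabs_pos A). pose proof (Rle_abs (-A)). rewrite Rabs_Ropp in H1. nra. }
  assert (B * / INR N * u N ^ 2 >= - (Rabs B * / INR N * u N ^ 2)).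
  { assert (0 <= / INR N * u N ^ 2) by (apply Rmult_le_pos; [left; apply Rinv_0_lt_compat; lra| apply pow2_ge_0]).
    pose proof (Rabs_pos B). pose proof (Rle_abs (-B)). rewrite Rabs_Ropp in H2. nra. }
  pose proof (Ev_nonneg N u). assert (0 <= (/ INR N)^2) by (apply pow2_ge_0).
  assert (0 <= (/ INR N)^2 * Ev N u) by (apply Rmult_le_pos; auto).
  unfold K. nra. Qed.

Lemma nash_ineq N u L0 Emax : (1 <= N)%nat -> 0 < L0 -> 0 < Emax ->
  L1 N u <= L0 -> Ev N u <= Emax ->
  9 / (16 * L0 ^ 2 * (4 * L0 ^ 2 + Emax)) * Ev N u ^ 3
   - 9 / (16 * L0 ^ 2 * (4 * L0 ^ 2 + Emax)) * (16 * L0 ^ 4 * eps N ^ 2) * Ev N u <= Dv N u.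
Proof. intros HN HL0 HEm HL HE. set (E := Ev N u) in *. set (k := 9 / (16 * L0 ^ 2 * (4 * L0 ^ 2 + Emax))).
  assert (Hk: 0 < k). { unfold k. apply Rdiv_lt_0_compat. lra. apply Rmult_lt_0_compat; nra. }
  pose proof (Dv_nonneg N u) as HD. pose proof (Ev_nonneg N u) as HE0. fold E in HE0.
  pose proof (L1_nonneg N u) as HL1.
  assert (HNp: 0 < INR N) by (apply lt_0_INR; lia).
  destruct (Req_dec E 0) as [Hz|Hz].
  { rewrite Hz. replace (k * 0 ^ 3 - k * (16 * L0 ^ 4 * eps N ^ 2) * 0) with 0 by ring. auto. }
  assert (Epos: 0 < E) by lra.
  destruct (ceil_nat (4 * L0 ^ 2 / E)) as [m [Hm1 Hm2]].
  { apply Rlt_le, Rdiv_lt_0_compat; nra. }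
  assert (Hx: 0 < 4 * L0 ^ 2 / E) by (apply Rdiv_lt_0_compat; nra).
  destruct (le_lt_dec m (S N)) as [HmN|HmN].
  - assert (Hm1n: (1 <= m)%nat). { destruct m. simpl in Hm1; lra. lia. }
    pose proof (nash_basic N u m Hm1n HmN) as Hn. fold E in Hn.
    assert (Hmp: 0 < INR m) by lra.
    set (sq := sqrt (INR m * Dv N u)) in *.
    assert (Hsq: 0 <= sq) by apply sqrt_pos.
    assert (Hsq2: sq * sq = INR m * Dv N u) by (apply sqrt_sqrt; apply Rmult_le_pos; lra).
    assert (H1: E <= L0 * (L0 / INR m + sq)).
    { eapply Rle_trans; [apply Hn|]. apply Rmult_le_compat; auto.
      apply Rplus_le_le_0_compat; auto. apply Rdiv_le_0_compat; lra.
      apply Rplus_le_compat_r. apply Rmult_le_compat_r; auto. left; apply Rinv_0_lt_compat; lra. }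
    assert (H2: L0 * (L0 / INR m) <= E / 4).
    { apply Rmult_le_reg_l with (4 * INR m). lra.
      replace (4 * INR m * (L0 * (L0 / INR m))) with (4 * L0 ^ 2) by (field; lra).
      replace (4 * INR m * (E / 4)) with (INR m * E) by field.
      apply Rmult_lt_compat_r with (r := E) in Hm1; auto. unfold Rdiv in Hm1.
      rewrite Rmult_assoc, Rinv_l, Rmult_1_r in Hm1 by lra. lra. }
    assert (H3: 3 / 4 * E <= L0 * sq) by lra.
    assert (H4: 9 / 16 * E ^ 2 <= L0 ^ 2 * (INR m * Dv N u)).
    { rewrite <- Hsq2. assert (0 <= 3/4*E) by lra. nra. }
    assert (H5: INR m * E <= 4 * L0 ^ 2 + E).
    { apply Rmult_le_compat_r with (r := E) in Hm2; [|lra].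
      replace ((4 * L0 ^ 2 / E + 1) * E) with (4 * L0 ^ 2 + E) in Hm2 by (field; lra). lra. }
    assert (H6: 9 / 16 * E ^ 3 <= L0 ^ 2 * (4 * L0 ^ 2 + E) * Dv N u).
    { assert (9 / 16 * E ^ 3 <= L0 ^ 2 * (INR m * E) * Dv N u).
      { replace (9 / 16 * E ^ 3) with (9 / 16 * E ^ 2 * E) by ring.
        replace (L0 ^ 2 * (INR m * E) * Dv N u) with (L0 ^ 2 * (INR m * Dv N u) * E) by ring.
        apply Rmult_le_compat_r; lra. }
      assert (L0 ^ 2 * (INR m * E) * Dv N u <= L0 ^ 2 * (4 * L0 ^ 2 + E) * Dv N u).
      { apply Rmult_le_compat_r; auto. apply Rmult_le_compat_l; nra. }
      lra. }
    assert (H7: k * E ^ 3 <= Dv N u).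
    { unfold k. assert (P: 0 < 16 * L0 ^ 2 * (4 * L0 ^ 2 + Emax)) by (apply Rmult_lt_0_compat; nra).
      apply Rmult_le_reg_l with (16 * L0 ^ 2 * (4 * L0 ^ 2 + Emax)); auto.
      replace (16 * L0 ^ 2 * (4 * L0 ^ 2 + Emax) * (9 / (16 * L0 ^ 2 * (4 * L0 ^ 2 + Emax)) * E ^ 3)) with (9 * E ^ 3) by (field; nra).
      assert (16 * L0 ^ 2 * (4 * L0 ^ 2 + E) * Dv N u <= 16 * L0 ^ 2 * (4 * L0 ^ 2 + Emax) * Dv N u).
      { apply Rmult_le_compat_r; auto. apply Rmult_le_compat_l; nra. }
      lra. }
    assert (0 <= k * (16 * L0 ^ 4 * eps N ^ 2) * E).
    { apply Rmult_le_pos; [|lra]. apply Rmult_le_pos; [lra|]. apply Rmult_le_pos; [nra| apply pow2_ge_0]. }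
    lra.
  - assert (HmN2: INR (S (S N)) <= INR m) by (apply le_INR; lia).
    rewrite !S_INR in HmN2.
    assert (HEs: E * INR N < 4 * L0 ^ 2).
    { assert (INR N < 4 * L0 ^ 2 / E) by lra. apply Rmult_lt_compat_r with (r := E) in H; auto.
      unfold Rdiv in H. rewrite Rmult_assoc, Rinv_l, Rmult_1_r in H by lra. lra. }
    assert (HE2: E ^ 2 <= 16 * L0 ^ 4 * eps N ^ 2).
    { unfold eps. assert (0 <= E * INR N) by nra.
      assert ((E * INR N) ^ 2 <= (4 * L0 ^ 2) ^ 2) by (apply pow_maj_Rabs; rewrite Rabs_right; lra).
      replace (E ^ 2) with ((E * INR N) ^ 2 * (/ INR N) ^ 2) by (field; lra).
      replace (16 * L0 ^ 4 * (/ INR N) ^ 2) with ((4 * L0 ^ 2) ^ 2 * (/ INR N) ^ 2) by ring.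
      apply Rmult_le_compat_r; auto. apply pow2_ge_0. }
    replace (k * E ^ 3 - k * (16 * L0 ^ 4 * eps N ^ 2) * E) with (k * E * (E ^ 2 - 16 * L0 ^ 4 * eps N ^ 2)) by ring.
    assert (0 <= k * E) by nra. nra.
Qed.

Definition coefG (N : nat) (G : nat -> nat -> R) (x y : nat) (k : nat) : R :=
  matpow N G k x y / (2 ^ k * INR (Factorial.fact k)).
Definition SG (N : nat) (G : nat -> nat -> R) (t : R) (x y : nat) : R := PSeries (coefG N G x y) t.

Lemma matmul_sm N M1 M2 i j : matmul N M1 M2 i j = sm (fun k => M1 i k * M2 k j) (S N).
Proof. unfold matmul. apply sum_f_sm. Qed.

Lemma sm_abs f n : Rabs (sm f n) <= sm (fun k => Rabs (f k)) n.
Proof. induction n; simpl. rewrite Rabs_R0; lra. eapply Rle_trans. apply Rabs_triang. lra. Qed.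

Lemma matpow_bound N G K k x y : 0 <= K -> (forall i j, Rabs (G i j) <= K) ->
  Rabs (matpow N G k x y) <= (INR (S N) * K) ^ k.
Proof. intros HK HG. revert x y. induction k; intros x y.
  - simpl. unfold idmat. destruct (Nat.eqb x y); rewrite ?Rabs_R1, ?Rabs_R0; lra.
  - simpl matpow. rewrite matmul_sm.
    assert (Rabs (sm (fun z => matpow N G k x z * G z y) (S N)) <= sm (fun _ => (INR (S N) * K) ^ k * K) (S N)).
    { eapply Rle_trans. apply sm_abs. apply sm_le. intros z _. rewrite Rabs_mult.
      apply Rmult_le_compat; auto; apply Rabs_pos. }
    rewrite sm_const in H. cbn [pow]. replace ((INR (S N) * K) * (INR (S N) * K) ^ k) with (INR (S N) * ((INR (S N) * K) ^ k * K)) by ring. lra. Qed.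

Lemma pow_fact_le_exp y n : 0 <= y -> y ^ n / INR (Factorial.fact n) <= exp y.
Proof. intros Hy. eapply Rle_trans; [|apply (exp_ge_taylor y n Hy)].
  rewrite sum_f_sm. cbn [sm]. assert (0 <= sm (fun k => y ^ k / INR (Factorial.fact k)) n).
  { apply sm_nonneg. intros. apply Rdiv_le_0_compat. apply pow_le; auto. apply lt_0_INR, lt_O_fact. }
  lra. Qed.

Lemma coefG_radius N G K x y t : 0 <= K -> (forall i j, Rabs (G i j) <= K) ->
  Rbar_lt (Rabs t) (CV_radius (coefG N G x y)).
Proof. intros HK HG. destruct (CV_radius_bounded (coefG N G x y)) as [Hub _].
  assert (Hr: Rbar_le (Rabs t + 1) (CV_radius (coefG N G x y))).
  { apply Hub. set (r := Rabs t + 1). assert (Hr: 0 <= r) by (unfold r; pose proof (Rabs_pos t); lra).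
    set (c := INR (S N) * K). assert (Hc: 0 <= c) by (unfold c; apply Rmult_le_pos; [apply pos_INR|auto]).
    exists (exp (c * r / 2)). intros n. unfold coefG.
    assert (Hf: 0 < INR (Factorial.fact n)) by (apply lt_0_INR, lt_O_fact).
    assert (H2: 0 < 2 ^ n) by (apply pow_lt; lra).
    rewrite Rabs_mult, Rabs_div by nra. rewrite (Rabs_right (2 ^ n * INR (Factorial.fact n))) by nra.
    rewrite (Rabs_right (r ^ n)) by (apply Rle_ge, pow_le; auto).
    eapply Rle_trans; [|apply (pow_fact_le_exp (c * r / 2) n)]; [|apply Rmult_le_pos; [apply Rmult_le_pos|]; lra].
    replace ((c * r / 2) ^ n / INR (Factorial.fact n)) with (c ^ n / (2 ^ n * INR (Factorial.fact n)) * r ^ n)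
      by (unfold Rdiv; rewrite !Rpow_mult_distr, Rinv_mult, pow_inv; ring).
    apply Rmult_le_compat_r. apply pow_le; auto.
    unfold Rdiv. apply Rmult_le_compat_r. left; apply Rinv_0_lt_compat; nra.
    apply matpow_bound; auto. }
  destruct (CV_radius (coefG N G x y)); simpl in *; auto. lra. Qed.

Lemma is_pseries_sm (c : nat -> nat -> R) (l g : nat -> R) t n :
  (forall z, (z < n)%nat -> is_pseries (c z) t (l z)) ->
  is_pseries (fun k => sm (fun z => c z k * g z) n) t (sm (fun z => l z * g z) n).
Proof. induction n; intros H.
  - simpl. apply is_pseries_R. apply is_series_Reals. intros e He. exists O. intros m _.
    rewrite sum_f_sm. replace (sm (fun n => 0 * t ^ n) (S m)) with 0. unfold Rdist. rewrite Rminus_0_r, Rabs_R0; lra.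
    clear. induction (S m) as [|p IHp]; simpl; auto. rewrite <- IHp. ring.
  - simpl. apply (is_pseries_ext (PS_plus (fun k => sm (fun z => c z k * g z) n) (PS_scal (g n) (c n)))).
    { intros k. unfold PS_plus, PS_scal. simpl. unfold plus, scal; simpl. unfold mult; simpl. rewrite (Rmult_comm (c n k)). reflexivity. }
    replace (sm (fun z => l z * g z) n + l n * g n) with (plus (sm (fun z => l z * g z) n) (scal (g n) (l n))).
    2:{ unfold plus, scal; simpl; unfold mult; simpl. ring. }
    apply (@is_pseries_plus R_AbsRing R_NormedModule). apply IHn; intros; apply H; lia.
    apply (@is_pseries_scal R_AbsRing R_NormedModule). unfold mult; simpl; ring. apply H; lia. Qed.

Lemma SG_correct N G K x y t : 0 <= K -> (forall i j, Rabs (G i j) <= K) ->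
  is_pseries (coefG N G x y) t (SG N G t x y).
Proof. intros HK HG. apply PSeries_correct. apply CV_radius_inside. eapply coefG_radius; eauto. Qed.

Lemma PS_derive_coefG N G x y : forall k,
  PS_derive (coefG N G x y) k = / 2 * sm (fun z => coefG N G x z k * G z y) (S N).
Proof. intros k. unfold PS_derive, coefG. simpl matpow. rewrite matmul_sm.
  assert (Hf: 0 < INR (Factorial.fact k)) by (apply lt_0_INR, lt_O_fact).
  assert (H2: 0 < 2 ^ k) by (apply pow_lt; lra).
  rewrite (sm_ext (fun z => matpow N G k x z / (2 ^ k * INR (Factorial.fact k)) * G z y)
     (fun z => / (2 ^ k * INR (Factorial.fact k)) * (matpow N G k x z * G z y))) by (intros; unfold Rdiv; ring).
  rewrite sm_scal. change (Factorial.fact (S k)) with (S k * Factorial.fact k)%nat. rewrite mult_INR.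
  assert (0 < INR (S k)) by (apply lt_0_INR; lia).
  simpl pow. field. repeat split; lra. Qed.

Lemma SG_deriv N G K x y t : 0 <= K -> (forall i j, Rabs (G i j) <= K) ->
  is_derive (fun t => SG N G t x y) t (/ 2 * sm (fun z => SG N G t x z * G z y) (S N)).
Proof. intros HK HG. unfold SG at 1. eapply is_derive_ext. intros; reflexivity.
  replace (/ 2 * sm (fun z => SG N G t x z * G z y) (S N)) with (PSeries (PS_derive (coefG N G x y)) t).
  apply is_derive_PSeries. eapply coefG_radius; eauto.
  apply is_pseries_unique.
  apply (is_pseries_ext (PS_scal (/2) (fun k => sm (fun z => coefG N G x z k * G z y) (S N)))).
  { intros k. rewrite PS_derive_coefG. reflexivity. }
  change (/ 2 * sm (fun z => SG N G t x z * G z y) (S N)) with (scal (/2) (sm (fun z => SG N G t x z * G z y) (S N))).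
  apply (@is_pseries_scal R_AbsRing R_NormedModule). unfold mult; simpl; ring.
  apply is_pseries_sm. intros z _. eapply SG_correct; eauto. Qed.

Lemma SG_0 N G x y : SG N G 0 x y = idmat x y.
Proof. unfold SG. rewrite PSeries_0. unfold coefG. simpl. field. Qed.

Definition KD A B N := 3 + Rabs (A * eps N) + Rabs (B * eps N).

Lemma KD_pos A B N : 0 <= KD A B N.
Proof. unfold KD. pose proof (Rabs_pos (A * eps N)). pose proof (Rabs_pos (B * eps N)). lra. Qed.

Lemma Delta_bound A B N : forall i j, Rabs (Delta A B N i j) <= KD A B N.
Proof. intros i j. unfold KD, Delta.
  repeat match goal with |- context [Nat.eqb ?a ?b] => destruct (Nat.eqb a b) end;
  repeat match goal with |- context [Nat.ltb ?a ?b] => destruct (Nat.ltb a b) end; simpl;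
  unfold Rabs; repeat match goal with |- context [Rcase_abs ?x] => destruct (Rcase_abs x) end; lra.
Qed.

Lemma pR_SG A B N t x y : pR A B N t x y = SG N (Delta A B N) t x y.
Proof.
  assert (HU: Un_cv (expPartial A B N t x y) (SG N (Delta A B N) t x y)).
  { pose proof (SG_correct N (Delta A B N) (KD A B N) x y t (KD_pos A B N) (Delta_bound A B N)) as H.
    apply is_pseries_R, is_series_Reals in H. intros e He. destruct (H e He) as [M HM]. exists M.
    intros n Hn. specialize (HM n Hn). unfold expPartial.
    replace (sum_f_R0 (fun k => (t / 2) ^ k / INR (Factorial.fact k) * matpow N (Delta A B N) k x y) n)
      with (sum_f_R0 (fun n0 => coefG N (Delta A B N) x y n0 * t ^ n0) n). exact HM.
    apply sum_eq. intros k _. unfold coefG.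
    assert (0 < INR (Factorial.fact k)) by (apply lt_0_INR, lt_O_fact).
    assert (0 < 2 ^ k) by (apply pow_lt; lra).
    unfold Rdiv. rewrite Rpow_mult_distr, pow_inv. field. lra. }
  unfold pR. match goal with |- proj1_sig ?p = _ => generalize (proj2_sig p); generalize (proj1_sig p) end; intros l [Hl|[Hn _]].
  - eapply UL_sequence; eauto.
  - exfalso. apply Hn. eauto.
Qed.

Lemma d_eq (f : R -> R) (x l l' : R) : l = l' -> is_derive f x l -> is_derive f x l'.
Proof. intros ->; auto. Qed.

Lemma d_plus (f g : R -> R) x df dg : is_derive f x df -> is_derive g x dg ->
  is_derive (fun t => f t + g t) x (df + dg).
Proof. intros. apply (@is_derive_plus R_AbsRing R_NormedModule); auto. Qed.
Lemma d_minus (f g : R -> R) x df dg : is_derive f x df -> is_derive g x dg ->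
  is_derive (fun t => f t - g t) x (df - dg).
Proof. intros. apply (@is_derive_minus R_AbsRing R_NormedModule); auto. Qed.
Lemma d_mult (f g : R -> R) x df dg : is_derive f x df -> is_derive g x dg ->
  is_derive (fun t => f t * g t) x (df * g x + f x * dg).
Proof. intros. apply (@is_derive_mult R_AbsRing); auto. intros; apply Rmult_comm. Qed.
Lemma d_const (c x : R) : is_derive (fun _ => c) x 0.
Proof. apply (@is_derive_const R_AbsRing R_NormedModule). Qed.
Lemma d_expl k x : is_derive (fun t => exp (k * t)) x (k * exp (k * x)).
Proof. assert (Hl: is_derive (fun t => k * t) x k).
  { eapply d_eq; [|apply is_derive_scal; apply (@is_derive_id R_AbsRing)]. simpl; unfold one; simpl; ring. }
  eapply d_eq; [|apply (@is_derive_comp R_AbsRing R_NormedModule exp (fun t => k*t) x (exp (k*x)) k); [apply is_derive_exp | exact Hl]].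
  simpl; unfold scal; simpl; unfold mult; simpl; ring. Qed.
Lemma d_ext (f g : R -> R) x l : (forall t, f t = g t) -> is_derive f x l -> is_derive g x l.
Proof. intros H. apply is_derive_ext; auto. Qed.

Lemma d_sm (f : nat -> R -> R) (d : nat -> R) x n :
  (forall k, (k < n)%nat -> is_derive (f k) x (d k)) -> is_derive (fun t => sm (fun k => f k t) n) x (sm d n).
Proof. induction n; intros H; simpl. apply d_const. apply d_plus. apply IHn; intros; apply H; lia. apply H; lia. Qed.

Lemma mvt (f f' : R -> R) a b : a < b -> (forall c, a <= c <= b -> is_derive f c (f' c)) ->
  exists c, a < c < b /\ f b - f a = f' c * (b - a).
Proof. intros Hab H. destruct (MVT_cor2 f f' a b Hab) as [c [Hc1 Hc2]].
  intros c Hc. apply is_derive_Reals. auto. exists c; split; auto. Qed.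

Lemma decr (f f' : R -> R) a b : a <= b -> (forall c, a <= c <= b -> is_derive f c (f' c)) ->
  (forall c, a <= c <= b -> f' c <= 0) -> f b <= f a.
Proof. intros Hab H H'. destruct (Req_dec a b). subst; lra.
  destruct (mvt f f' a b) as [c [Hc1 Hc2]]; auto. lra.
  assert (f' c <= 0) by (apply H'; lra). nra. Qed.

Definition sol (N : nat) (M : nat -> nat -> R) (w : R -> nat -> R) : Prop :=
  forall y t, (y <= N)%nat -> is_derive (fun s => w s y) t (/ 2 * Mv N M (w t) y).

Definition symm (N : nat) (M : nat -> nat -> R) : Prop := forall i j, (i <= N)%nat -> (j <= N)%nat -> M i j = M j i.

Lemma sol_Ev N M w t : sol N M w -> is_derive (fun s => Ev N (w s)) t (Bf N M (w t)).
Proof. intros H. unfold Ev, Bf. apply (d_sm (fun z s => w s z ^ 2) (fun z => w t z * Mv N M (w t) z)).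
  intros k Hk. eapply d_eq; [|apply is_derive_pow; apply H; lia]. simpl. field. Qed.

Lemma sol_Mv N M w : sol N M w -> sol N M (fun t y => Mv N M (w t) y).
Proof. intros H y t Hy. unfold Mv at 1.
  eapply d_eq; [|apply (d_sm (fun z s => w s z * M z y) (fun z => / 2 * Mv N M (w t) z * M z y))].
  - unfold Mv at 2. rewrite <- sm_scal. apply sm_ext. intros; ring.
  - intros k Hk. eapply d_eq; [|apply d_mult; [apply H; lia| apply d_const]]. cbv beta. ring. Qed.

Lemma Mv_lin N M a b ca cb y : Mv N M (fun z => ca * a z + cb * b z) y = ca * Mv N M a y + cb * Mv N M b y.
Proof. unfold Mv. rewrite <- !sm_scal, <- sm_plus. apply sm_ext; intros; ring. Qed.

Lemma sol_Bf N M w t : sol N M w -> symm N M ->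
  is_derive (fun s => Bf N M (w s)) t (Ev N (fun y => Mv N M (w t) y)).
Proof. intros H Hs. pose proof (sol_Mv N M w H) as Hv. unfold Bf.
  eapply d_eq; [|apply (d_sm (fun y s => w s y * Mv N M (w s) y)
     (fun y => / 2 * Mv N M (w t) y * Mv N M (w t) y + w t y * (/ 2 * Mv N M (fun z => Mv N M (w t) z) y)))].
  2:{ intros k Hk. apply d_mult. apply H; lia. apply (Hv k t). lia. }
  rewrite sm_plus. unfold Ev.
  assert (Hsw: sm (fun y => w t y * (/ 2 * Mv N M (fun z => Mv N M (w t) z) y)) (S N) =
               / 2 * sm (fun z => Mv N M (w t) z ^ 2) (S N)).
  { rewrite <- sm_scal. unfold Mv at 1.
    rewrite (sm_ext _ (fun y => sm (fun z => / 2 * (Mv N M (w t) z * (w t y * M y z))) (S N))).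
    2:{ intros y Hy. rewrite <- sm_scal, <- sm_scal. apply sm_ext. intros z Hz. rewrite Hs by lia. ring. }
    rewrite sm_swap. apply sm_ext. intros z Hz. rewrite sm_scal, sm_scal. unfold Mv. simpl. ring. }
  rewrite Hsw. rewrite <- sm_scal, <- sm_plus. apply sm_ext. intros. field. Qed.

Lemma sol_lin N M w1 w2 c1 c2 : sol N M w1 -> sol N M w2 -> sol N M (fun t y => c1 * w1 t y + c2 * w2 t y).
Proof. intros H1 H2 y t Hy. rewrite Mv_lin.
  eapply d_eq; [|apply d_plus; apply is_derive_scal; [apply H1|apply H2]; auto]. ring. Qed.

Lemma Delta_symm A B N : symm N (Delta A B N).
Proof. intros i j _ _. apply Delta_sym. Qed.

Lemma row_sol A B N x : sol N (Delta A B N) (fun t y => pR A B N t x y).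
Proof. intros y t Hy. apply (d_ext (fun s => SG N (Delta A B N) s x y)). intros s. symmetry; apply pR_SG.
  eapply d_eq; [|apply (SG_deriv N (Delta A B N) (KD A B N) x y t (KD_pos A B N) (Delta_bound A B N))].
  unfold Mv. f_equal. apply sm_ext. intros z _. rewrite pR_SG. reflexivity. Qed.

Lemma row_0 A B N x y : pR A B N 0 x y = idmat x y.
Proof. rewrite pR_SG. apply SG_0. Qed.

Lemma sq_le_Ev N u y : (y <= N)%nat -> u y ^ 2 <= Ev N u.
Proof. intros Hy. unfold Ev. pose proof (sm_sub_le (fun z => u z ^ 2) y 1 (S N)) as H.
  simpl in H. rewrite Nat.add_0_r in H. assert (0 + u y ^ 2 <= sm (fun z => u z ^ 2) (S N)).
  { apply H. intros; apply pow2_ge_0. lia. } lra. Qed.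

Lemma gronwall N M w c s t : sol N M w -> (forall u, Bf N M u <= c * Ev N u) -> s <= t ->
  Ev N (w t) <= exp (c * (t - s)) * Ev N (w s).
Proof. intros Hw Hc Hst.
  assert (H: exp (- c * t) * Ev N (w t) <= exp (- c * s) * Ev N (w s)).
  { apply (decr (fun r => exp (- c * r) * Ev N (w r))
      (fun r => (- c * exp (- c * r)) * Ev N (w r) + exp (- c * r) * Bf N M (w r)) s t Hst).
    - intros r _. apply (d_mult (fun r => exp (- c * r)) (fun r => Ev N (w r))). apply d_expl. apply sol_Ev; auto.
    - intros r _. pose proof (Hc (w r)). pose proof (exp_pos (- c * r)).
      assert (exp (- c * r) * Bf N M (w r) <= exp (- c * r) * (c * Ev N (w r))) by (apply Rmult_le_compat_l; lra).
      lra. }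
  replace (c * (t - s)) with (c * t + (- c * s)) by ring. rewrite exp_plus.
  replace (exp (- c * t) * Ev N (w t)) with (/ exp (c * t) * Ev N (w t)) in H.
  2:{ replace (- c * t) with (- (c * t)) by ring. rewrite exp_Ropp. reflexivity. }
  pose proof (exp_pos (c * t)). apply Rmult_le_compat_l with (r := exp (c * t)) in H; [|lra].
  rewrite <- Rmult_assoc, Rinv_r, Rmult_1_l in H by lra. lra. Qed.

Lemma coer_Bf A B N c : (forall u, / 2 * Dv N u - c * eps N ^ 2 * Ev N u <= - Bf N (Delta A B N) u) ->
  forall u, Bf N (Delta A B N) u <= (c * eps N ^ 2) * Ev N u.
Proof. intros H u. specialize (H u). pose proof (Dv_nonneg N u). lra. Qed.

Definition Pm A B N (i j : nat) : R := Delta A B N i j + KD A B N * dl i j.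

Lemma Delta_offdiag A B N i j : i <> j -> 0 <= Delta A B N i j.
Proof. intros H. unfold Delta.
  repeat match goal with |- context [Nat.eqb ?a ?b] => destruct (Nat.eqb_spec a b) end;
  repeat match goal with |- context [Nat.ltb ?a ?b] => destruct (Nat.ltb a b) end; simpl; try lra; lia. Qed.

Lemma Pm_nonneg A B N i j : 0 <= Pm A B N i j.
Proof. unfold Pm, dl. destruct (Nat.eqb_spec i j).
  - subst. pose proof (Delta_bound A B N j j). pose proof (Rle_abs (- Delta A B N j j)). rewrite Rabs_Ropp in H0. lra.
  - pose proof (Delta_offdiag A B N i j n). lra. Qed.

Lemma Pm_bound A B N i j : Rabs (Pm A B N i j) <= 2 * KD A B N.
Proof. unfold Pm, dl. pose proof (Delta_bound A B N i j). pose proof (KD_pos A B N).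
  destruct (Nat.eqb i j). eapply Rle_trans. apply Rabs_triang. rewrite Rmult_1_r. rewrite (Rabs_right (KD A B N)) by lra. lra.
  rewrite Rmult_0_r, Rplus_0_r. lra. Qed.

Lemma matpow_nonneg N G k x y : (forall i j, 0 <= G i j) -> 0 <= matpow N G k x y.
Proof. intros H. revert x y. induction k; intros x y; simpl.
  unfold idmat. destruct (Nat.eqb x y); lra.
  rewrite matmul_sm. apply sm_nonneg. intros. apply Rmult_le_pos; auto. Qed.

Lemma SG_nonneg N G K x y t : 0 <= K -> (forall i j, Rabs (G i j) <= K) -> (forall i j, 0 <= G i j) -> 0 <= t ->
  0 <= SG N G t x y.
Proof. intros HK HG Hp Ht. pose proof (SG_correct N G K x y t HK HG) as H.
  apply is_pseries_R, is_series_Reals in H.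
  assert (Hu: Un_cv (fun n => sum_f_R0 (fun k => coefG N G x y k * t ^ k) n) (SG N G t x y)) by exact H.
  apply is_lim_seq_Reals in Hu.
  assert (Rbar_le 0 (SG N G t x y)). { apply (is_lim_seq_le (fun _ => 0) (fun n => sum_f_R0 (fun k => coefG N G x y k * t ^ k) n) 0 (SG N G t x y)); auto. 2: apply is_lim_seq_const.
    intros n. rewrite sum_f_sm. apply sm_nonneg. intros k _. apply Rmult_le_pos; [|apply pow_le; auto].
    unfold coefG. apply Rdiv_le_0_compat. apply matpow_nonneg; auto.
    apply Rmult_lt_0_compat. apply pow_lt; lra. apply lt_0_INR, lt_O_fact. }
  simpl in H0. auto. Qed.

Lemma Mv_Pm A B N u y : (y <= N)%nat -> Mv N (Pm A B N) u y = Mv N (Delta A B N) u y + KD A B N * u y.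
Proof. intros Hy. unfold Mv, Pm. rewrite (sm_ext _ (fun z => u z * Delta A B N z y + KD A B N * (u z * dl z y))) by (intros; ring).
  rewrite sm_plus, sm_scal, sm_dl. destruct (Nat.ltb_spec y (S N)); [reflexivity|lia]. Qed.

Lemma h_sol A B N x : sol N (Delta A B N) (fun t y => exp (- (KD A B N / 2) * t) * SG N (Pm A B N) t x y).
Proof. intros y t Hy.
  eapply d_eq; [|apply d_mult; [apply d_expl| apply (SG_deriv N (Pm A B N) (2 * KD A B N) x y t)]].
  2:{ pose proof (KD_pos A B N); lra. }
  2:{ apply Pm_bound. }
  change (sm (fun z => SG N (Pm A B N) t x z * Pm A B N z y) (S N)) with (Mv N (Pm A B N) (fun z => SG N (Pm A B N) t x z) y).
  rewrite Mv_Pm by auto.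
  replace (Mv N (Delta A B N) (fun y0 => exp (- (KD A B N / 2) * t) * SG N (Pm A B N) t x y0) y)
    with (exp (- (KD A B N / 2) * t) * Mv N (Delta A B N) (fun z => SG N (Pm A B N) t x z) y).
  field.
  unfold Mv. rewrite <- sm_scal. apply sm_ext. intros; ring. Qed.

Lemma row_nonneg A B N c x y t : (forall u, Bf N (Delta A B N) u <= c * Ev N u) -> (y <= N)%nat -> 0 <= t ->
  0 <= pR A B N t x y.
Proof. intros Hc Hy Ht.
  set (g := fun t y => 1 * pR A B N t x y + (-1) * (exp (- (KD A B N / 2) * t) * SG N (Pm A B N) t x y)).
  assert (Hg: sol N (Delta A B N) g) by (apply sol_lin; [apply row_sol|apply h_sol]).
  assert (Hg0: Ev N (g 0) = 0).
  { unfold Ev. rewrite (sm_ext _ (fun _ => 0)). rewrite sm_const; ring. intros z _. unfold g.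
    rewrite row_0, SG_0. rewrite Rmult_0_r, exp_0. ring. }
  pose proof (gronwall N _ g c 0 t Hg Hc Ht) as HG. rewrite Hg0, Rmult_0_r in HG.
  pose proof (sq_le_Ev N (g t) y Hy). assert (g t y ^ 2 = 0) by (pose proof (pow2_ge_0 (g t y)); lra).
  assert (g t y = 0) by nra.
  unfold g in H1. assert (0 <= exp (- (KD A B N / 2) * t) * SG N (Pm A B N) t x y).
  { apply Rmult_le_pos. left; apply exp_pos. apply (SG_nonneg N _ (2 * KD A B N)); auto.
    pose proof (KD_pos A B N); lra. apply Pm_bound. apply Pm_nonneg. }
  lra. Qed.

Lemma bernoulli x n : 0 <= x -> 1 + INR n * x <= (1 + x) ^ n.
Proof. intros Hx. induction n. simpl; lra. rewrite S_INR. cbn [pow].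
  assert (0 <= INR n * x * x) by (apply Rmult_le_pos; [apply Rmult_le_pos; [apply pos_INR|]|]; lra). nra. Qed.

Lemma pow_exp_le y n : 0 <= y -> (1 + y) ^ n <= exp (INR n * y).
Proof. intros Hy. induction n. simpl. rewrite Rmult_0_l, exp_0; lra.
  rewrite S_INR. cbn [pow]. replace ((INR n + 1) * y) with (y + INR n * y) by ring. rewrite exp_plus.
  apply Rmult_le_compat; try lra. apply pow_le; lra. apply exp_ineq1_le. Qed.

Lemma pow_anti q z n : 0 <= q <= 1 -> (z <= n)%nat -> q ^ n <= q ^ z.
Proof. intros Hq Hz. replace n with (z + (n - z))%nat by lia. rewrite pow_add.
  assert (0 <= q ^ z) by (apply pow_le; lra). assert (q ^ (n - z) <= 1) by (rewrite <- (pow1 (n - z)); apply pow_incr; lra).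
  assert (0 <= q ^ (n - z)) by (apply pow_le; lra). nra. Qed.

Lemma q_facts a N : 4 <= a -> 2 * a <= INR N ->
  1 / 2 <= 1 - a * eps N < 1 /\ (1 - a * eps N) ^ (N - 1) <= 1 / 2 /\ exp (- 2 * a) <= (1 - a * eps N) ^ N.
Proof. intros Ha HN. assert (HNp: 0 < INR N) by lra. set (x := a * eps N).
  assert (Hx: x = a / INR N) by (unfold x, eps; field; lra).
  assert (Hx0: 0 < x) by (rewrite Hx; apply Rdiv_lt_0_compat; lra).
  assert (Hx1: x <= 1 / 2). { rewrite Hx. apply Rmult_le_reg_l with (INR N); auto. field_simplify; lra. }
  split; [lra|]. split.
  - assert (Hq: 1 - x <= / (1 + x)). { apply Rmult_le_reg_l with (1 + x). lra. rewrite Rinv_r by lra. nra. }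
    assert (HN1: (1 <= N)%nat). { destruct N. simpl in HNp; lra. lia. }
    assert (Hb: 1 + INR (N - 1) * x <= (1 + x) ^ (N - 1)) by (apply bernoulli; lra).
    rewrite minus_INR in Hb by auto. simpl INR in Hb.
    assert (Hb2: 3 <= (1 + x) ^ (N - 1)).
    { assert ((INR N - 1) * x = a - x) by (rewrite Hx; field; lra). lra. }
    eapply Rle_trans. apply pow_incr with (y := / (1 + x)). lra.
    rewrite pow_inv. apply Rmult_le_reg_l with ((1 + x) ^ (N - 1)). lra.
    rewrite Rinv_r by lra. lra.
  - assert (Hq: / (1 + 2 * x) <= 1 - x). { apply Rmult_le_reg_l with (1 + 2 * x). lra. rewrite Rinv_r by lra. nra. }
    eapply Rle_trans; [|apply pow_incr with (x := / (1 + 2 * x)); split; [left; apply Rinv_0_lt_compat; lra| exact Hq]].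
    rewrite pow_inv. assert (He: (1 + 2 * x) ^ N <= exp (INR N * (2 * x))) by (apply pow_exp_le; lra).
    replace (INR N * (2 * x)) with (2 * a) in He by (rewrite Hx; field; lra).
    replace (- 2 * a) with (- (2 * a)) by ring. rewrite exp_Ropp.
    apply Rinv_le_contravar; auto. apply pow_lt; lra. Qed.

Definition phi (N : nat) (q : R) (z : nat) : R := q ^ z + q ^ (N - z).

Lemma phi_Mv A B N a y : (2 <= N)%nat -> 4 * Rabs A <= a -> 4 * Rabs B <= a -> 0 <= eps N ->
  1 / 2 <= 1 - a * eps N < 1 -> (1 - a * eps N) ^ (N - 1) <= 1 / 2 -> (y <= N)%nat ->
  Mv N (Delta A B N) (phi N (1 - a * eps N)) y <= 2 * (a * eps N) ^ 2 * phi N (1 - a * eps N) y.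
Proof. intros HN HA HB He Hq Hs Hy. set (e := eps N) in *. set (q := 1 - a * e) in *.
  assert (Hae: a * e = 1 - q) by (unfold q; ring).
  rewrite Mv_Delta by lia. unfold phi.
  pose proof (Rle_abs A). pose proof (Rle_abs (-A)). pose proof (Rle_abs B). pose proof (Rle_abs (-B)).
  rewrite Rabs_Ropp in *.
  assert (Hs0: 0 <= q ^ (N - 1)) by (apply pow_le; lra).
  assert (HqN: q ^ N = q * q ^ (N - 1)). { replace N with (S (N - 1)) at 1 by lia. reflexivity. }
  fold e.
  destruct (Nat.eqb_spec y 0) as [->|Hy0].
  - destruct (Nat.ltb_spec 0 N); [|lia]. destruct (Nat.eqb_spec 0 N); [lia|].
    rewrite Nat.sub_0_r. rewrite pow_O, pow_1, HqN.
    set (s := q ^ (N - 1)) in *.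
    assert (HH1: -2 * (1 + q * s) + (q + s) + 0 + (1 - A * e) * (1 + q * s) + 0 = - (a * e) * (1 - s) - A * e * (1 + q * s)) by (rewrite Hae; ring).
    rewrite HH1.
    assert (0 <= q * s <= 1) by (split; nra).
    assert (- A * e * (1 + q * s) <= 2 * Rabs A * e).
      { assert (0 <= e * (1 + q * s)) by nra.
        assert (- A * (e * (1 + q * s)) <= Rabs A * (e * (1 + q * s))) by (apply Rmult_le_compat_r; lra).
        assert (Rabs A * (e * (1 + q * s)) <= Rabs A * (2 * e)) by (apply Rmult_le_compat_l; [apply Rabs_pos| nra]).
        lra. }
    assert (a * e * (1 - s) >= a * e / 2) by nra.
    assert (0 <= 2 * (a * e) ^ 2 * (1 + q * s)) by (apply Rmult_le_pos; [apply Rmult_le_pos; [lra|apply pow2_ge_0]|lra]).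
    nra.
  - destruct (Nat.eqb_spec y N) as [->|HyN].
    + destruct (Nat.ltb_spec N N); [lia|]. rewrite Nat.sub_diag.
      replace (N - pred N)%nat with 1%nat by lia. replace (pred N) with (N - 1)%nat by lia.
      rewrite pow_O, pow_1, HqN. set (s := q ^ (N - 1)) in *.
      assert (HH1: -2 * (q * s + 1) + 0 + (s + q) + 0 + (1 - B * e) * (q * s + 1) = - (a * e) * (1 - s) - B * e * (1 + q * s)) by (rewrite Hae; ring).
      rewrite HH1.
      assert (0 <= q * s <= 1) by (split; nra).
      assert (- B * e * (1 + q * s) <= 2 * Rabs B * e).
      { assert (0 <= e * (1 + q * s)) by nra.
        assert (- B * (e * (1 + q * s)) <= Rabs B * (e * (1 + q * s))) by (apply Rmult_le_compat_r; lra).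
        assert (Rabs B * (e * (1 + q * s)) <= Rabs B * (2 * e)) by (apply Rmult_le_compat_l; [apply Rabs_pos| nra]).
        lra. }
      assert (a * e * (1 - s) >= a * e / 2) by nra.
      assert (0 <= 2 * (a * e) ^ 2 * (q * s + 1)) by (apply Rmult_le_pos; [apply Rmult_le_pos; [lra|apply pow2_ge_0]|lra]).
      nra.
    + destruct (Nat.ltb_spec y N); [|lia].
      destruct y as [|j]; [lia|]. simpl pred.
      set (k := (N - S (S j))%nat).
      replace (N - S j)%nat with (S k) by (unfold k; lia). replace (N - j)%nat with (S (S k)) by (unfold k; lia).
      cbn [pow]. set (r := q ^ j). set (s := q ^ k).
      assert (0 <= r) by (apply pow_le; lra). assert (0 <= s) by (apply pow_le; lra).
      replace (-2 * (q * r + q * s) + (q * (q * r) + s) + (r + q * (q * s)) + 0 + 0) with ((r + s) * (a * e) ^ 2)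
        by (rewrite Hae; ring).
      replace (2 * (a * e) ^ 2 * (q * r + q * s)) with ((r + s) * (a * e) ^ 2 * (2 * q)) by ring.
      assert (0 <= (r + s) * (a * e) ^ 2) by (apply Rmult_le_pos; [lra|apply pow2_ge_0]). nra.
Qed.

Lemma sol_weight N M w (f : nat -> R) t : sol N M w -> symm N M ->
  is_derive (fun s => sm (fun z => w s z * f z) (S N)) t (/ 2 * sm (fun u => w t u * Mv N M f u) (S N)).
Proof. intros Hw Hs.
  eapply d_eq; [|apply (d_sm (fun z s => w s z * f z) (fun z => / 2 * Mv N M (w t) z * f z))].
  2:{ intros k Hk. eapply d_eq; [|apply d_mult; [apply Hw; lia|apply d_const]]. cbv beta; ring. }
  rewrite <- sm_scal. unfold Mv.
  rewrite (sm_ext _ (fun z => sm (fun u => / 2 * (w t u * (f z * M z u))) (S N))).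
  2:{ intros z Hz. rewrite <- !sm_scal. rewrite Rmult_comm, <- sm_scal. apply sm_ext. intros u Hu. rewrite Hs by lia. ring. }
  rewrite sm_swap. apply sm_ext. intros u Hu. rewrite <- !sm_scal. apply sm_ext. intros; ring. Qed.

Lemma L1_bound A B N a c T x t : (2 <= N)%nat -> 4 * Rabs A <= a -> 4 * Rabs B <= a -> 4 <= a -> 2 * a <= INR N ->
  (forall u, Bf N (Delta A B N) u <= c * Ev N u) -> (x <= N)%nat -> 0 <= t -> eps N ^ 2 * t <= T ->
  L1 N (fun z => pR A B N t x z) <= 2 * exp (a ^ 2 * T) / exp (- 2 * a).
Proof. intros HN HA HB Ha4 HaN Hc Hx Ht HT.
  destruct (q_facts a N Ha4 HaN) as [Hq [Hs Hexp]].
  assert (HNp: 0 < INR N) by lra.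
  assert (He: 0 <= eps N) by (unfold eps; left; apply Rinv_0_lt_compat; lra).
  set (q := 1 - a * eps N) in *. set (lam := (a * eps N) ^ 2).
  set (w := fun s z => pR A B N s x z).
  assert (Hw: sol N (Delta A B N) w) by apply row_sol.
  set (Sw := fun r => sm (fun z => w r z * phi N q z) (S N)).
  assert (Hphi0: forall z, 0 <= phi N q z) by (intros; unfold phi; apply Rplus_le_le_0_compat; apply pow_le; lra).
  assert (Hphi1: forall z, (z <= N)%nat -> q ^ N <= phi N q z).
  { intros z Hz. unfold phi. pose proof (pow_anti q z N ltac:(lra) Hz). assert (0 <= q ^ (N - z)) by (apply pow_le; lra). lra. }
  assert (Hphi2: forall z, phi N q z <= 2).
  { intros z. unfold phi. assert (q ^ z <= 1) by (rewrite <- (pow1 z); apply pow_incr; lra).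
    assert (q ^ (N - z) <= 1) by (rewrite <- (pow1 (N - z)); apply pow_incr; lra). lra. }
  assert (Hwn: forall r z, 0 <= r -> (z <= N)%nat -> 0 <= w r z) by (intros; unfold w; eapply row_nonneg; eauto).
  assert (HF: exp (- lam * t) * Sw t <= exp (- lam * 0) * Sw 0).
  { apply (decr (fun r => exp (- lam * r) * Sw r)
      (fun r => (- lam * exp (- lam * r)) * Sw r + exp (- lam * r) * (/ 2 * sm (fun u => w r u * Mv N (Delta A B N) (phi N q) u) (S N))) 0 t Ht).
    - intros r _. apply (d_mult (fun r => exp (- lam * r)) Sw). apply d_expl.
      unfold Sw. apply sol_weight; auto. apply Delta_symm.
    - intros r Hr. pose proof (exp_pos (- lam * r)).
      assert (sm (fun u => w r u * Mv N (Delta A B N) (phi N q) u) (S N) <= sm (fun u => 2 * lam * (w r u * phi N q u)) (S N)).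
      { apply sm_le. intros u Hu. assert (0 <= w r u) by (apply Hwn; [lra|lia]).
        pose proof (phi_Mv A B N a u HN HA HB He Hq Hs ltac:(lia)) as Hpm. fold q in Hpm. fold lam in Hpm.
        replace (2 * lam * (w r u * phi N q u)) with (w r u * (2 * lam * phi N q u)) by ring. apply Rmult_le_compat_l; auto. }
      rewrite sm_scal in H0. fold (Sw r) in H0.
      assert (exp (- lam * r) * (/ 2 * sm (fun u => w r u * Mv N (Delta A B N) (phi N q) u) (S N)) <= exp (- lam * r) * (lam * Sw r)).
      { apply Rmult_le_compat_l; lra. }
      lra. }
  assert (HS0: Sw 0 = phi N q x).
  { unfold Sw, w. rewrite (sm_ext _ (fun z => phi N q z * dl z x)). rewrite sm_dl.
    destruct (Nat.ltb_spec x (S N)); [reflexivity|lia].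
    intros z _. rewrite row_0. unfold idmat, dl. rewrite Nat.eqb_sym. destruct (Nat.eqb z x); ring. }
  rewrite HS0, Rmult_0_r, exp_0, Rmult_1_l in HF.
  assert (HSt: Sw t <= exp (lam * t) * 2).
  { pose proof (exp_pos (lam * t)). apply Rmult_le_compat_l with (r := exp (lam * t)) in HF; [|lra].
    rewrite <- Rmult_assoc, <- exp_plus in HF. replace (lam * t + - lam * t) with 0 in HF by ring. rewrite exp_0 in HF.
    specialize (Hphi2 x). nra. }
  assert (Hlt: exp (lam * t) <= exp (a ^ 2 * T)).
  { destruct (Req_dec (lam * t) (a ^ 2 * T)) as [E|E]; [rewrite E; lra|].
    left. apply exp_increasing. unfold lam in *. replace ((a * eps N) ^ 2 * t) with (a ^ 2 * (eps N ^ 2 * t)) by ring.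
    assert (a ^ 2 * (eps N ^ 2 * t) <= a ^ 2 * T) by (apply Rmult_le_compat_l; [apply pow2_ge_0|auto]). lra. }
  assert (HqN: 0 < q ^ N) by (apply pow_lt; lra).
  assert (HL: L1 N (fun z => pR A B N t x z) <= Sw t / q ^ N).
  { unfold L1, Sw. unfold Rdiv. rewrite Rmult_comm, <- sm_scal. apply sm_le. intros z Hz.
    rewrite Rabs_right by (apply Rle_ge, Hwn; [lra|lia]). fold (w t z).
    assert (0 <= w t z) by (apply Hwn; [lra|lia]). specialize (Hphi1 z ltac:(lia)).
    apply Rmult_le_reg_l with (q ^ N); auto. rewrite <- Rmult_assoc, Rinv_r, Rmult_1_l by lra. nra. }
  eapply Rle_trans; [apply HL|]. unfold Rdiv. apply Rmult_le_compat.
  - unfold Sw. apply sm_nonneg. intros z Hz. apply Rmult_le_pos; auto. apply Hwn; [lra|lia].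
  - left; apply Rinv_0_lt_compat; auto.
  - nra.
  - apply Rinv_le_contravar; auto. apply exp_pos.
Qed.

Lemma incr (f f' : R -> R) a b : a <= b -> (forall c, a <= c <= b -> is_derive f c (f' c)) ->
  (forall c, a <= c <= b -> 0 <= f' c) -> f a <= f b.
Proof. intros Hab H H'. assert (- f b <= - f a).
  { apply (decr (fun r => - f r) (fun r => - f' r) a b Hab).
    intros c Hc. eapply d_eq; [|apply (@is_derive_opp R_AbsRing R_NormedModule); apply H; auto]. reflexivity.
    intros c Hc. specialize (H' c Hc). lra. }
  lra. Qed.

Lemma Qdecay N M u s t : sol N M u -> symm N M -> 0 <= s < t ->
  - Bf N M (u t) * (t - s) <= Ev N (u s) - Ev N (u t).
Proof. intros Hu Hs Hst.
  destruct (mvt (fun r => Ev N (u r)) (fun r => Bf N M (u r)) s t) as [xi [Hxi Heq]]; [lra| |].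
  { intros c _. apply sol_Ev; auto. }
  assert (Bf N M (u xi) <= Bf N M (u t)).
  { apply (incr (fun r => Bf N M (u r)) (fun r => Ev N (fun y => Mv N M (u r) y))). lra.
    intros c _. apply sol_Bf; auto. intros; apply Ev_nonneg. }
  assert (Bf N M (u xi) * (t - s) <= Bf N M (u t) * (t - s)) by (apply Rmult_le_compat_r; lra).
  lra. Qed.

Lemma Vbound N M u c s t : sol N M u -> symm N M -> (forall v, Bf N M v <= c * Ev N v) -> 0 <= c -> 0 <= s < t ->
  Ev N (fun y => Mv N M (u t) y) * (t - s) <= exp (c * (t - s)) * (Bf N M (u t) - Bf N M (u s)).
Proof. intros Hu Hs Hc Hc0 Hst.
  destruct (mvt (fun r => Bf N M (u r)) (fun r => Ev N (fun y => Mv N M (u r) y)) s t) as [xi [Hxi Heq]]; [lra| |].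
  { intros c' _. apply sol_Bf; auto. }
  pose proof (gronwall N M (fun r y => Mv N M (u r) y) c xi t (sol_Mv N M u Hu) Hc ltac:(lra)) as HG.
  assert (exp (c * (t - xi)) <= exp (c * (t - s))).
  { destruct (Req_dec (c * (t - xi)) (c * (t - s))) as [E|E]; [rewrite E; lra|].
    left; apply exp_increasing. assert (c * (t - xi) <= c * (t - s)) by (apply Rmult_le_compat_l; lra). lra. }
  pose proof (Ev_nonneg N (fun y => Mv N M (u xi) y)).
  assert (Ev N (fun y => Mv N M (u t) y) <= exp (c * (t - s)) * Ev N (fun y => Mv N M (u xi) y)) by nra.
  rewrite Heq. assert (0 < t - s) by lra. nra. Qed.

Lemma nash_ode (E dE : R -> R) k1 rho t : 0 < k1 -> 0 <= rho -> 0 < t ->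
  (forall r, 0 <= r <= t -> is_derive E r (dE r)) -> (forall r, 0 <= r <= t -> 0 <= E r) -> E 0 = 1 ->
  (forall r, 0 <= r <= t -> dE r <= - k1 * E r ^ 3 + rho * E r) ->
  E t ^ 2 * t <= exp (2 * rho * t) / (2 * k1).
Proof. intros Hk Hr Ht HdE HE0 H0 Hineq.
  set (G := fun r => exp (- rho * r) * E r).
  set (dG := fun r => - rho * exp (- rho * r) * E r + exp (- rho * r) * dE r).
  assert (HdG: forall r, 0 <= r <= t -> is_derive G r (dG r)).
  { intros r Hr'. apply (d_mult (fun r => exp (- rho * r)) E). apply d_expl. auto. }
  assert (HG0: forall r, 0 <= r <= t -> 0 <= G r) by (intros r Hr'; unfold G; apply Rmult_le_pos; [left; apply exp_pos|auto]).
  assert (HdGle: forall r, 0 <= r <= t -> dG r <= - k1 * G r ^ 3).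
  { intros r Hr'. unfold dG, G. specialize (Hineq r Hr'). specialize (HE0 r Hr').
    pose proof (exp_pos (- rho * r)) as Hp.
    assert (Hp1: exp (- rho * r) <= 1). { rewrite <- exp_0. destruct (Req_dec (- rho * r) 0) as [EE|EE]; [rewrite EE; lra|].
      left; apply exp_increasing. nra. }
    assert (exp (- rho * r) * dE r <= exp (- rho * r) * (- k1 * E r ^ 3 + rho * E r)) by (apply Rmult_le_compat_l; lra).
    assert ((exp (- rho * r)) ^ 3 <= exp (- rho * r)).
    { replace ((exp (- rho * r)) ^ 3) with (exp (- rho * r) * ((exp (- rho * r)) * exp (- rho * r))) by ring.
      assert (exp (- rho * r) * exp (- rho * r) <= 1) by nra. nra. }
    assert (0 <= k1 * E r ^ 3) by (apply Rmult_le_pos; [lra|apply pow_le; auto]).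
    replace ((exp (- rho * r) * E r) ^ 3) with ((exp (- rho * r)) ^ 3 * E r ^ 3) by ring.
    nra. }
  assert (Gt_le: G t ^ 2 * t <= / (2 * k1)).
  { destruct (Req_dec (G t) 0) as [Z|Z].
    { rewrite Z. replace (0 ^ 2 * t) with 0 by ring. left; apply Rinv_0_lt_compat; lra. }
    assert (HGt: 0 < G t) by (pose proof (HG0 t ltac:(lra)); lra).
    assert (Gmono: forall r, 0 <= r <= t -> G t <= G r).
    { intros r Hr'. apply (decr G dG r t). lra. intros c Hc; apply HdG; lra.
      intros c Hc. pose proof (HdGle c ltac:(lra)). pose proof (HG0 c ltac:(lra)).
      assert (0 <= k1 * G c ^ 3) by (apply Rmult_le_pos; [lra|apply pow_le; auto]). lra. }
    set (H := fun r => / (G r ^ 2)).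
    assert (HdH: forall r, 0 <= r <= t -> is_derive H r (- (INR 2 * dG r * G r ^ 1) / (G r ^ 2) ^ 2)).
    { intros r Hr'. apply (is_derive_inv (fun r => G r ^ 2)). apply is_derive_pow. apply HdG; auto.
      pose proof (Gmono r Hr'). apply pow_nonzero. lra. }
    assert (HH: H 0 + 2 * k1 * t <= H t).
    { assert (H 0 - 2 * k1 * 0 <= H t - 2 * k1 * t).
      { apply (incr (fun r => H r - 2 * k1 * r) (fun r => - (INR 2 * dG r * G r ^ 1) / (G r ^ 2) ^ 2 - 2 * k1) 0 t). lra.
        - intros c Hc. apply d_minus. apply HdH; auto. eapply d_eq; [|apply is_derive_scal; apply (@is_derive_id R_AbsRing)].
          simpl; unfold one; simpl; ring.
        - intros c Hc. pose proof (Gmono c Hc). pose proof (HdGle c Hc). set (g := G c) in *.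
          assert (Hg: 0 < g) by lra. simpl INR.
          replace (- ((1 + 1) * dG c * g ^ 1) / (g ^ 2) ^ 2 - 2 * k1) with (2 * (- dG c - k1 * g ^ 3) / g ^ 3) by (field; lra).
          apply Rdiv_le_0_compat; [lra| apply pow_lt; auto]. }
      lra. }
    unfold H in HH. unfold G in HH at 1. rewrite Rmult_0_r, exp_0, H0 in HH.
    replace (/ ((1 * 1) ^ 2)) with 1 in HH by (simpl; field).
    assert (HGt2: 0 < G t ^ 2) by (apply pow_lt; auto).
    assert (2 * k1 * t <= / G t ^ 2) by lra.
    apply Rmult_le_reg_l with (2 * k1). lra. rewrite Rinv_r by lra.
    apply Rmult_le_compat_l with (r := G t ^ 2) in H1; [|lra]. rewrite Rinv_r in H1 by lra. lra. }
  assert (E t = exp (rho * t) * G t).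
  { unfold G. rewrite <- Rmult_assoc, <- exp_plus. replace (rho * t + - rho * t) with 0 by ring. rewrite exp_0; ring. }
  rewrite H. replace ((exp (rho * t) * G t) ^ 2 * t) with (exp (rho * t) ^ 2 * (G t ^ 2 * t)) by ring.
  replace (exp (2 * rho * t) / (2 * k1)) with (exp (rho * t) ^ 2 * / (2 * k1)).
  apply Rmult_le_compat_l; auto. apply pow2_ge_0.
  replace (2 * rho * t) with (rho * t + rho * t) by ring. rewrite exp_plus. unfold Rdiv. ring. Qed.

Lemma sqrt_half r : 0 <= r -> sqrt r / 2 <= sqrt (r / 2).
Proof. intros Hr. rewrite <- (sqrt_pow2 (sqrt r / 2)) by (pose proof (sqrt_pos r); lra).
  apply sqrt_le_1_alt. replace ((sqrt r / 2) ^ 2) with ((sqrt r * sqrt r) / 4) by (field).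
  rewrite sqrt_sqrt by auto. lra. Qed.

Lemma sqrt_sq_r r : 0 <= r -> sqrt r * sqrt r = r.
Proof. apply sqrt_sqrt. Qed.

Lemma le_sqrt_div X C r : 0 <= X -> 0 < r -> 0 <= C -> X ^ 2 * r <= C -> X <= sqrt C / sqrt r.
Proof. intros HX Hr HC H. assert (Hs: 0 < sqrt r) by (apply sqrt_lt_R0; auto).
  apply Rmult_le_reg_r with (sqrt r); auto. unfold Rdiv. rewrite Rmult_assoc, Rinv_l, Rmult_1_r by lra.
  rewrite <- (sqrt_pow2 (X * sqrt r)) by (apply Rmult_le_pos; lra).
  apply sqrt_le_1_alt. replace ((X * sqrt r) ^ 2) with (X ^ 2 * (sqrt r * sqrt r)) by ring. rewrite sqrt_sqrt; lra. Qed.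

Lemma abs_sqrt_div u C r : 0 < r -> 0 <= C -> u ^ 2 <= C / r -> Rabs u <= sqrt C / sqrt r.
Proof. intros Hr HC H. apply le_sqrt_div; auto. apply Rabs_pos. rewrite pow2_abs.
  apply Rmult_le_reg_r with (/ r). apply Rinv_0_lt_compat; auto. rewrite Rmult_assoc, Rinv_r, Rmult_1_r by lra. auto. Qed.

Lemma m_choice N T r : (1 <= N)%nat -> 0 < T -> 1 <= r -> r <= INR N ^ 2 * T ->
  exists m : nat, (1 <= m)%nat /\ (m <= S N)%nat /\ INR m <= 2 * sqrt r /\ sqrt r <= (1 + sqrt T) * INR m.
Proof. intros HN HT Hr1 Hr2. assert (Hs1: 1 <= sqrt r) by (rewrite <- sqrt_1; apply sqrt_le_1_alt; auto).
  destruct (ceil_nat (sqrt r)) as [k [Hk1 Hk2]]. apply sqrt_pos.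
  pose proof (sqrt_pos T).
  destruct (le_lt_dec k (S N)) as [Hk|Hk].
  - exists k. assert (1 <= k)%nat. { destruct k. simpl in Hk1; lra. lia. }
    repeat split; auto; try lra. assert (0 <= sqrt T * INR k) by (apply Rmult_le_pos; [auto|apply pos_INR]). nra.
  - exists (S N). repeat split; auto.
    + assert (INR (S N) < INR k) by (apply lt_INR; auto). lra.
    + assert (sqrt r <= INR N * sqrt T).
      { rewrite <- (sqrt_pow2 (INR N)) by apply pos_INR. rewrite <- sqrt_mult by (try apply pow2_ge_0; lra).
        apply sqrt_le_1_alt; auto. }
      rewrite S_INR. assert (0 <= INR N) by apply pos_INR. nra. Qed.

Lemma pointwise_L2 N u y m : (y <= N)%nat -> (1 <= m)%nat -> (m <= S N)%nat ->
  u y ^ 2 <= 2 * Ev N u / INR m + 2 * INR m * Dv N u.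
Proof. intros Hy Hm1 Hm2. pose proof (window_L2 N u y m Hy Hm1 Hm2). assert (0 < INR m) by (apply lt_0_INR; lia).
  apply Rmult_le_reg_l with (INR m); auto. replace (INR m * (2 * Ev N u / INR m + 2 * INR m * Dv N u)) with
  (2 * Ev N u + 2 * INR m ^ 2 * Dv N u) by (field; lra). lra. Qed.

Lemma pointwise_time N T u y r a b : (1 <= N)%nat -> 0 < T -> 1 <= r -> r <= INR N ^ 2 * T -> (y <= N)%nat ->
  0 <= a -> 0 <= b -> Ev N u <= a / sqrt r -> Dv N u <= b / (r * sqrt r) ->
  u y ^ 2 <= (2 * (1 + sqrt T) * a + 4 * b) / r.
Proof. intros HN HT Hr1 Hr2 Hy Ha Hb HE HD.
  destruct (m_choice N T r HN HT Hr1 Hr2) as [m [Hm1 [Hm2 [Hm3 Hm4]]]].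
  pose proof (pointwise_L2 N u y m Hy Hm1 Hm2).
  assert (Hsr: 0 < sqrt r) by (apply sqrt_lt_R0; lra). assert (Hm: 0 < INR m) by (apply lt_0_INR; lia).
  assert (Hrr: sqrt r * sqrt r = r) by (apply sqrt_sqrt; lra).
  pose proof (Ev_nonneg N u). pose proof (Dv_nonneg N u). pose proof (sqrt_pos T).
  assert (HH1: 2 * Ev N u / INR m <= 2 * (1 + sqrt T) * a / r).
  { assert (/ INR m <= (1 + sqrt T) / sqrt r).
    { assert (sqrt r / (1 + sqrt T) <= INR m).
      { apply Rmult_le_reg_l with (1 + sqrt T); [lra|].
        replace ((1 + sqrt T) * (sqrt r / (1 + sqrt T))) with (sqrt r) by (field; lra). lra. }
      replace ((1 + sqrt T) / sqrt r) with (/ (sqrt r / (1 + sqrt T))) by (field; lra).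
      apply Rinv_le_contravar; auto. apply Rdiv_lt_0_compat; lra. }
    assert (Ev N u / INR m <= a / sqrt r * ((1 + sqrt T) / sqrt r)).
    { unfold Rdiv at 1. apply Rmult_le_compat; auto. left; apply Rinv_0_lt_compat; auto. }
    replace (2 * (1 + sqrt T) * a / r) with (2 * (a / sqrt r * ((1 + sqrt T) / sqrt r))) by (set (sr := sqrt r) in *; replace r with (sr * sr) by auto; field; lra).
    unfold Rdiv in *. lra. }
  assert (HH2: 2 * INR m * Dv N u <= 4 * b / r).
  { assert (H3: INR m * Dv N u <= 2 * sqrt r * (b / (r * sqrt r))) by (apply Rmult_le_compat; lra).
    replace (2 * sqrt r * (b / (r * sqrt r))) with (2 * b / r) in H3 by (field; lra).
    unfold Rdiv in *. lra. }
  unfold Rdiv in *. lra. Qed.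

Lemma exp_mono x y : x <= y -> exp x <= exp y.
Proof. intros H. destruct (Req_dec x y). subst; lra. left; apply exp_increasing; lra. Qed.

Lemma Mv_abs_bound A B N u y K : (1 <= N)%nat -> (y <= N)%nat -> 0 <= eps N <= 1 ->
  (forall z, (z <= N)%nat -> Rabs (u z) <= K) -> 0 <= K ->
  Rabs (Mv N (Delta A B N) u y) <= (6 + Rabs A + Rabs B) * K.
Proof. intros HN Hy He Hu HK. rewrite Mv_Delta by auto.
  assert (H1: Rabs (1 - A * eps N) <= 1 + Rabs A).
  { eapply Rle_trans. apply Rabs_triang. rewrite Rabs_Ropp, Rabs_R1, Rabs_mult, (Rabs_right (eps N)) by lra.
    pose proof (Rabs_pos A). nra. }
  assert (H2: Rabs (1 - B * eps N) <= 1 + Rabs B).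
  { eapply Rle_trans. apply Rabs_triang. rewrite Rabs_Ropp, Rabs_R1, Rabs_mult, (Rabs_right (eps N)) by lra.
    pose proof (Rabs_pos B). nra. }
  assert (T1: Rabs (-2 * u y) <= 2 * K) by (rewrite Rabs_mult; replace (Rabs (-2)) with 2 by (unfold Rabs; destruct Rcase_abs; lra); specialize (Hu y Hy); lra).
  assert (T2: Rabs (if Nat.ltb y N then u (S y) else 0) <= K).
  { destruct (Nat.ltb_spec y N). apply Hu; lia. rewrite Rabs_R0; lra. }
  assert (T3: Rabs (if Nat.eqb y 0 then 0 else u (pred y)) <= K).
  { destruct (Nat.eqb y 0). rewrite Rabs_R0; lra. apply Hu; lia. }
  assert (T4: Rabs (if Nat.eqb y 0 then (1 - A * eps N) * u O else 0) <= (1 + Rabs A) * K).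
  { destruct (Nat.eqb y 0). rewrite Rabs_mult. apply Rmult_le_compat; auto using Rabs_pos. apply Hu; lia.
    rewrite Rabs_R0. pose proof (Rabs_pos A). nra. }
  assert (T5: Rabs (if Nat.eqb y N then (1 - B * eps N) * u N else 0) <= (1 + Rabs B) * K).
  { destruct (Nat.eqb y N). rewrite Rabs_mult. apply Rmult_le_compat; auto using Rabs_pos.
    rewrite Rabs_R0. pose proof (Rabs_pos B). nra. }
  set (t1 := -2 * u y) in *. set (t2 := if Nat.ltb y N then u (S y) else 0) in *.
  set (t3 := if Nat.eqb y 0 then 0 else u (pred y)) in *.
  set (t4 := if Nat.eqb y 0 then (1 - A * eps N) * u O else 0) in *.
  set (t5 := if Nat.eqb y N then (1 - B * eps N) * u N else 0) in *.
  pose proof (Rabs_triang (t1 + t2 + t3 + t4) t5). pose proof (Rabs_triang (t1 + t2 + t3) t4).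
  pose proof (Rabs_triang (t1 + t2) t3). pose proof (Rabs_triang t1 t2). nra. Qed.

Lemma row_bounds A B T : 0 < T -> exists C0 C1 CP CD : R, exists N2 : nat,
  0 <= C0 /\ 0 <= C1 /\ 0 <= CP /\ 0 <= CD /\
  forall N, (N2 <= N)%nat -> forall x y, (x <= N)%nat -> (y <= N)%nat ->
  (forall r, 0 <= r <= INR N ^ 2 * T -> Rabs (pR A B N r x y) <= C0 /\
        Rabs (/ 2 * Mv N (Delta A B N) (fun z => pR A B N r x z) y) <= C1) /\
  (forall r, 1 <= r <= INR N ^ 2 * T -> Rabs (pR A B N r x y) <= CP / sqrt r /\
        Rabs (/ 2 * Mv N (Delta A B N) (fun z => pR A B N r x z) y) <= CD / (r * sqrt r)).
Proof. intros HT. destruct (coercive A B) as [c [N1 [Hc Hco]]].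
  set (a := 4 * (Rabs A + Rabs B) + 4).
  pose proof (Rabs_pos A) as HA0. pose proof (Rabs_pos B) as HB0.
  destruct (ceil_nat (2 * a)) as [na [Hna _]]. unfold a; lra.
  set (L0 := 2 * exp (a ^ 2 * T) / exp (- 2 * a)).
  assert (HL0: 0 < L0) by (unfold L0; apply Rdiv_lt_0_compat; [pose proof (exp_pos (a^2*T)); lra| apply exp_pos]).
  set (Emax := exp (c * T)). assert (HEm: 0 < Emax) by apply exp_pos.
  set (kap := 9 / (16 * L0 ^ 2 * (4 * L0 ^ 2 + Emax))).
  assert (Hkap: 0 < kap) by (unfold kap; apply Rdiv_lt_0_compat; [lra| apply Rmult_lt_0_compat; nra]).
  set (CE2 := exp (2 * ((8 * kap * L0 ^ 4 + c) * T)) / kap).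
  assert (HCE2: 0 <= CE2) by (unfold CE2; left; apply Rdiv_lt_0_compat; [apply exp_pos|auto]).
  set (sE := sqrt CE2). assert (HsE: 0 <= sE) by apply sqrt_pos.
  pose proof (sqrt_pos T) as HsT.
  assert (HcT: 0 <= c * T) by nra.
  set (CW := 2 * (1 + sqrt T) * sE + 4 * ((8 + 2 * c * T) * sE)).
  assert (HCW: 0 <= CW) by (unfold CW; nra).
  set (CV := 2 * exp (c * T) * (16 + c * T) * sE).
  assert (HCV: 0 <= CV) by (unfold CV; pose proof (exp_pos (c * T)); repeat apply Rmult_le_pos; lra).
  set (CVy := 2 * (1 + sqrt T) * CV + 4 * ((32 + 2 * c * T) * CV)).
  assert (HCVy: 0 <= CVy) by (unfold CVy; nra).
  exists (sqrt Emax), (/ 2 * ((6 + Rabs A + Rabs B) * sqrt Emax)), (sqrt CW), (/ 2 * sqrt CVy), (Nat.max (Nat.max N1 na) 2).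
  pose proof (sqrt_pos Emax). pose proof (sqrt_pos CW). pose proof (sqrt_pos CVy).
  split; [auto|]. split; [nra|]. split; [auto|]. split; [lra|].
  intros N HN x y Hx Hy.
  assert (HN1: (N1 <= N)%nat) by lia. assert (HN2: (2 <= N)%nat) by lia. assert (HN1': (1 <= N)%nat) by lia.
  assert (HNa: 2 * a <= INR N) by (assert (INR na <= INR N) by (apply le_INR; lia); lra).
  assert (HNp: 0 < INR N) by (apply lt_0_INR; lia).
  assert (HNge1: 1 <= INR N) by (apply (le_INR 1); lia).
  set (e := eps N).
  assert (He: 0 < e) by (unfold e, eps; apply Rinv_0_lt_compat; auto).
  assert (He1: e <= 1) by (unfold e, eps; rewrite <- Rinv_1; apply Rinv_le_contravar; lra).
  assert (HeT: forall r, 0 <= r -> r <= INR N ^ 2 * T -> e ^ 2 * r <= T).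
  { intros r Hr0 Hr. unfold e, eps. rewrite pow_inv. apply Rmult_le_reg_l with (INR N ^ 2). apply pow_lt; auto.
    rewrite <- Rmult_assoc, Rinv_r, Rmult_1_l by (apply pow_nonzero; lra). lra. }
  assert (HeT2: forall r, 0 < r -> r <= INR N ^ 2 * T -> e ^ 2 <= T / r).
  { intros r Hr0 Hr. specialize (HeT r ltac:(lra) Hr). apply Rmult_le_reg_r with r; auto.
    unfold Rdiv. rewrite Rmult_assoc, Rinv_l, Rmult_1_r by lra. lra. }
  specialize (Hco N HN1 HN1'). fold e in Hco.
  assert (HBf: forall u, Bf N (Delta A B N) u <= (c * e ^ 2) * Ev N u) by (apply coer_Bf; auto).
  assert (HBf2: forall u, Dv N u <= 2 * (- Bf N (Delta A B N) u) + 2 * (c * e ^ 2) * Ev N u).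
  { intros u. specialize (Hco u). lra. }
  set (w := fun r z => pR A B N r x z).
  assert (Hw: sol N (Delta A B N) w) by apply row_sol.
  assert (Hsym: symm N (Delta A B N)) by apply Delta_symm.
  assert (Hce: 0 <= c * e ^ 2) by (apply Rmult_le_pos; [lra|apply pow2_ge_0]).
  assert (HE0: Ev N (w 0) = 1).
  { unfold Ev, w. rewrite (sm_ext _ (fun z => 1 * dl z x)). rewrite (sm_dl (fun _ => 1)).
    destruct (Nat.ltb_spec x (S N)); [ring|lia].
    intros z _. rewrite row_0. unfold idmat, dl. rewrite Nat.eqb_sym. destruct (Nat.eqb z x); ring. }
  assert (HEmax: forall r, 0 <= r <= INR N ^ 2 * T -> Ev N (w r) <= Emax).
  { intros r Hr. pose proof (gronwall N _ w (c * e ^ 2) 0 r Hw HBf ltac:(lra)). rewrite HE0 in H2.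
    eapply Rle_trans. apply H2. rewrite Rmult_1_r, Rminus_0_r. unfold Emax. apply exp_mono.
    rewrite Rmult_assoc. apply Rmult_le_compat_l; [lra|]. apply HeT; lra. }
  assert (HL1: forall r, 0 <= r <= INR N ^ 2 * T -> L1 N (w r) <= L0).
  { intros r Hr. unfold w, L0. apply (L1_bound A B N a (c * e ^ 2) T x r); auto; unfold a; try lra.
    apply HeT; lra. }
  assert (HEdec: forall r, 0 < r <= INR N ^ 2 * T -> Ev N (w r) <= sE / sqrt r).
  { intros r Hr. apply le_sqrt_div; [apply Ev_nonneg|lra|auto|].
    set (rho := (8 * kap * L0 ^ 4 + c) * e ^ 2).
    assert (Hrho: 0 <= rho) by (unfold rho; apply Rmult_le_pos; [|apply pow2_ge_0]; assert (0 <= kap * L0^4) by (apply Rmult_le_pos; [lra|apply pow_le; lra]); lra).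
    pose proof (nash_ode (fun r => Ev N (w r)) (fun r => Bf N (Delta A B N) (w r)) (kap / 2) rho r
      ltac:(lra) Hrho ltac:(lra)) as HO.
    assert (Hfin: Ev N (w r) ^ 2 * r <= exp (2 * rho * r) / (2 * (kap / 2))).
    { apply HO; auto.
      - intros r' _. apply sol_Ev; auto.
      - intros r' _. apply Ev_nonneg.
      - intros r' Hr'. pose proof (Hco (w r')) as Hc1.
        pose proof (nash_ineq N (w r') L0 Emax HN1' HL0 HEm (HL1 r' ltac:(lra)) (HEmax r' ltac:(lra))) as Hn.
        fold kap in Hn. fold e in Hn. unfold rho. nra. }
    eapply Rle_trans; [apply Hfin|]. unfold CE2. replace (2 * (kap / 2)) with kap by field.
    unfold Rdiv. apply Rmult_le_compat_r. left; apply Rinv_0_lt_compat; auto. apply exp_mono.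
    unfold rho. replace (2 * ((8 * kap * L0 ^ 4 + c) * e ^ 2) * r) with (2 * ((8 * kap * L0 ^ 4 + c) * (e ^ 2 * r))) by ring.
    assert (0 <= 8 * kap * L0 ^ 4 + c) by (assert (0 <= kap * L0^4) by (apply Rmult_le_pos; [lra|apply pow_le; lra]); lra).
    assert ((8 * kap * L0 ^ 4 + c) * (e ^ 2 * r) <= (8 * kap * L0 ^ 4 + c) * T) by (apply Rmult_le_compat_l; auto; apply HeT; lra).
    lra. }
  assert (Hsq: forall r, 0 < r -> 0 < sqrt r) by (intros; apply sqrt_lt_R0; auto).
  assert (Hsr: forall r, 0 < r -> sqrt r * sqrt r = r) by (intros; apply sqrt_sqrt; lra).
  assert (HQ: forall r, 0 < r <= INR N ^ 2 * T -> - Bf N (Delta A B N) (w r) <= 4 * sE / (r * sqrt r)).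
  { intros r Hr. pose proof (Qdecay N _ w (r / 2) r Hw Hsym ltac:(lra)) as Hq.
    pose proof (HEdec (r / 2) ltac:(lra)) as He2. pose proof (Ev_nonneg N (w r)).
    pose proof (sqrt_half r ltac:(lra)). pose proof (Hsq r ltac:(lra)).
    assert (sE / sqrt (r / 2) <= 2 * sE / sqrt r).
    { replace (2 * sE / sqrt r) with (sE * / (sqrt r / 2)) by (field; lra). unfold Rdiv.
      apply Rmult_le_compat_l; auto. apply Rinv_le_contravar; lra. }
    replace (r - r / 2) with (r / 2) in Hq by field.
    apply Rmult_le_reg_r with (r / 2). lra.
    replace (4 * sE / (r * sqrt r) * (r / 2)) with (2 * sE / sqrt r) by (field; lra). lra. }
  assert (HQlow: forall r, 0 < r <= INR N ^ 2 * T -> Bf N (Delta A B N) (w r) <= c * T * sE / (r * sqrt r)).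
  { intros r Hr. eapply Rle_trans. apply HBf. pose proof (HEdec r Hr). pose proof (HeT2 r ltac:(lra) ltac:(lra)).
    pose proof (Ev_nonneg N (w r)). pose proof (Hsq r ltac:(lra)).
    assert (c * e ^ 2 * Ev N (w r) <= c * (T / r) * (sE / sqrt r)).
    { apply Rmult_le_compat; [lra|lra| apply Rmult_le_compat_l; lra | lra]. }
    replace (c * T * sE / (r * sqrt r)) with (c * (T / r) * (sE / sqrt r)) by (field; lra). lra. }
  assert (HD: forall r, 0 < r <= INR N ^ 2 * T -> Dv N (w r) <= (8 + 2 * c * T) * sE / (r * sqrt r)).
  { intros r Hr. pose proof (HBf2 (w r)). pose proof (HQ r Hr). pose proof (HEdec r Hr).
    pose proof (HeT2 r ltac:(lra) ltac:(lra)). pose proof (Ev_nonneg N (w r)). pose proof (Hsq r ltac:(lra)).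
    assert (c * e ^ 2 * Ev N (w r) <= c * (T / r) * (sE / sqrt r)).
    { apply Rmult_le_compat; [lra|lra| apply Rmult_le_compat_l; lra | lra]. }
    replace ((8 + 2 * c * T) * sE / (r * sqrt r)) with (2 * (4 * sE / (r * sqrt r)) + 2 * (c * (T / r) * (sE / sqrt r))) by (field; lra).
    lra. }
  assert (HP: forall r, 1 <= r <= INR N ^ 2 * T -> Rabs (w r y) <= sqrt CW / sqrt r).
  { intros r Hr. apply abs_sqrt_div; [lra|auto|].
    apply (pointwise_time N T (w r) y r sE ((8 + 2 * c * T) * sE)); auto; try lra.
    apply Rmult_le_pos; lra. apply HEdec; lra. apply HD; lra. }
  set (v := fun r z => Mv N (Delta A B N) (w r) z).
  assert (Hv: sol N (Delta A B N) v) by (apply sol_Mv; auto).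
  assert (Hhalf: forall r, 0 < r -> r * sqrt r / 4 <= r / 2 * sqrt (r / 2)).
  { intros r Hr. pose proof (sqrt_half r ltac:(lra)). pose proof (Hsq r Hr).
    replace (r * sqrt r / 4) with (r / 2 * (sqrt r / 2)) by field. apply Rmult_le_compat_l; lra. }
  assert (HV: forall r, 0 < r <= INR N ^ 2 * T -> Ev N (v r) <= CV / (r * r * sqrt r)).
  { intros r Hr. pose proof (Vbound N _ w (c * e ^ 2) (r / 2) r Hw Hsym HBf Hce ltac:(lra)) as HV1.
    change (Ev N (fun y => Mv N (Delta A B N) (w r) y)) with (Ev N (v r)) in HV1. replace (r - r / 2) with (r / 2) in HV1 by field.
    pose proof (HQ (r / 2) ltac:(lra)) as Hq2. pose proof (HQlow r Hr) as Hql.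
    pose proof (Hhalf r ltac:(lra)). pose proof (Hsq r ltac:(lra)). pose proof (Hsq (r / 2) ltac:(lra)).
    assert (Hq3: 4 * sE / (r / 2 * sqrt (r / 2)) <= 16 * sE / (r * sqrt r)).
    { replace (16 * sE / (r * sqrt r)) with (4 * sE * / (r * sqrt r / 4)) by (field; lra). unfold Rdiv.
      apply Rmult_le_compat_l. lra. apply Rinv_le_contravar; auto. apply Rdiv_lt_0_compat; [nra|lra]. }
    set (X := Bf N (Delta A B N) (w r) - Bf N (Delta A B N) (w (r / 2))) in *.
    assert (HX: X <= (16 + c * T) * sE / (r * sqrt r)).
    { unfold X. replace ((16 + c * T) * sE / (r * sqrt r)) with (16 * sE / (r * sqrt r) + c * T * sE / (r * sqrt r)) by (field; lra). lra. }
    pose proof (Ev_nonneg N (v r)).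
    assert (HX0: 0 <= X). { pose proof (exp_pos (c * e ^ 2 * (r / 2))). assert (0 <= Ev N (v r) * (r / 2)) by (apply Rmult_le_pos; lra).
      destruct (Rle_lt_dec 0 X) as [h|h]; auto. assert (0 < exp (c * e ^ 2 * (r / 2)) * (- X)) by (apply Rmult_lt_0_compat; lra). lra. }
    assert (Hex: exp (c * e ^ 2 * (r / 2)) <= exp (c * T)).
    { apply exp_mono. rewrite Rmult_assoc. apply Rmult_le_compat_l; [lra|]. apply HeT; lra. }
    assert (Ev N (v r) * (r / 2) <= exp (c * T) * ((16 + c * T) * sE / (r * sqrt r))).
    { eapply Rle_trans. apply HV1. apply Rmult_le_compat; auto. left; apply exp_pos. }
    apply Rmult_le_reg_r with (r / 2). lra.
    replace (CV / (r * r * sqrt r) * (r / 2)) with (exp (c * T) * ((16 + c * T) * sE / (r * sqrt r))) by (unfold CV; field; lra).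
    lra. }
  assert (HQv: forall r, 0 < r <= INR N ^ 2 * T -> - Bf N (Delta A B N) (v r) <= 16 * CV / (r * r * r * sqrt r)).
  { intros r Hr. pose proof (Qdecay N _ v (r / 2) r Hv Hsym ltac:(lra)) as Hq.
    replace (r - r / 2) with (r / 2) in Hq by field.
    pose proof (HV (r / 2) ltac:(lra)) as HV2. pose proof (Ev_nonneg N (v r)).
    pose proof (sqrt_half r ltac:(lra)). pose proof (Hsq r ltac:(lra)).
    assert (CV / (r / 2 * (r / 2) * sqrt (r / 2)) <= 8 * CV / (r * r * sqrt r)).
    { replace (8 * CV / (r * r * sqrt r)) with (CV * / (r / 2 * (r / 2) * (sqrt r / 2))) by (field; lra). unfold Rdiv.
      apply Rmult_le_compat_l; auto. apply Rinv_le_contravar. apply Rmult_lt_0_compat; [nra|lra].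
      apply Rmult_le_compat_l; [nra|lra]. }
    apply Rmult_le_reg_r with (r / 2). lra.
    replace (16 * CV / (r * r * r * sqrt r) * (r / 2)) with (8 * CV / (r * r * sqrt r)) by (field; lra). lra. }
  assert (HQvlow: forall r, 0 < r <= INR N ^ 2 * T -> Bf N (Delta A B N) (v r) <= c * T * CV / (r * r * r * sqrt r)).
  { intros r Hr. eapply Rle_trans. apply HBf. pose proof (HV r Hr). pose proof (HeT2 r ltac:(lra) ltac:(lra)).
    pose proof (Ev_nonneg N (v r)). pose proof (Hsq r ltac:(lra)).
    assert (c * e ^ 2 * Ev N (v r) <= c * (T / r) * (CV / (r * r * sqrt r))).
    { apply Rmult_le_compat; [lra|lra| apply Rmult_le_compat_l; lra | lra]. }
    replace (c * T * CV / (r * r * r * sqrt r)) with (c * (T / r) * (CV / (r * r * sqrt r))) by (field; lra). lra. }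
  assert (HDv: forall r, 0 < r <= INR N ^ 2 * T -> Dv N (v r) <= (32 + 2 * c * T) * CV / (r * r * r * sqrt r)).
  { intros r Hr. pose proof (HBf2 (v r)). pose proof (HQv r Hr). pose proof (HV r Hr).
    pose proof (HeT2 r ltac:(lra) ltac:(lra)). pose proof (Ev_nonneg N (v r)). pose proof (Hsq r ltac:(lra)).
    assert (c * e ^ 2 * Ev N (v r) <= c * (T / r) * (CV / (r * r * sqrt r))).
    { apply Rmult_le_compat; [lra|lra| apply Rmult_le_compat_l; lra | lra]. }
    replace ((32 + 2 * c * T) * CV / (r * r * r * sqrt r)) with (2 * (16 * CV / (r * r * r * sqrt r)) + 2 * (c * (T / r) * (CV / (r * r * sqrt r)))) by (field; lra).
    lra. }
  assert (HPd: forall r, 1 <= r <= INR N ^ 2 * T -> Rabs (v r y) <= sqrt CVy / (r * sqrt r)).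
  { intros r Hr. pose proof (Hsq r ltac:(lra)).
    replace (r * sqrt r) with (sqrt (r * r * r)).
    2:{ rewrite sqrt_mult by nra. rewrite sqrt_square by lra. reflexivity. }
    apply abs_sqrt_div; [apply Rmult_lt_0_compat; nra|auto|].
    replace (CVy / (r * r * r)) with ((2 * (1 + sqrt T) * (CV / (r * r)) + 4 * ((32 + 2 * c * T) * CV / (r * r))) / r) by (unfold CVy; field; lra).
    apply (pointwise_time N T (v r) y r); auto; try lra.
    apply Rdiv_le_0_compat; [auto|nra]. apply Rdiv_le_0_compat; [nra|nra].
    replace (CV / (r * r) / sqrt r) with (CV / (r * r * sqrt r)) by (field; lra). apply HV; lra.
    replace ((32 + 2 * c * T) * CV / (r * r) / (r * sqrt r)) with ((32 + 2 * c * T) * CV / (r * r * r * sqrt r)) by (field; lra). apply HDv; lra. }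
  split.
  - intros r Hr. split.
    + change (pR A B N r x y) with (w r y). apply abs_le_sqrt. eapply Rle_trans. apply (sq_le_Ev N); auto. apply HEmax; auto.
    + rewrite Rabs_mult, Rabs_right by lra. apply Rmult_le_compat_l; [lra|].
      apply Mv_abs_bound; auto. fold e; lra. intros z Hz. change (pR A B N r x z) with (w r z). apply abs_le_sqrt.
      eapply Rle_trans. apply (sq_le_Ev N); auto. apply HEmax; auto.
  - intros r Hr. split.
    + apply (HP r Hr).
    + rewrite Rabs_mult, Rabs_right by lra. pose proof (HPd r Hr) as H5. unfold v, w in H5.
      replace (/ 2 * sqrt CVy / (r * sqrt r)) with (/ 2 * (sqrt CVy / (r * sqrt r))) by (field; split; [apply Rgt_not_eq, Hsq; lra|lra]).
      apply Rmult_le_compat_l; [lra|]. exact H5.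
Qed.

Lemma ln_le' x y : 0 < x -> x <= y -> ln x <= ln y.
Proof. intros Hx H. destruct (Req_dec x y). subst; lra. left; apply ln_increasing; lra. Qed.

Lemma RP1 x v : 1 <= x -> 0 <= v -> 1 <= Rpower x v.
Proof. intros Hx Hv. unfold Rpower. rewrite <- exp_0. apply exp_mono.
  pose proof (ln_le' 1 x ltac:(lra) Hx). rewrite ln_1 in H. nra. Qed.

Lemma RP2 x v : 0 < x < 1 -> v <= 1 -> x <= Rpower x v.
Proof. intros Hx Hv. unfold Rpower. rewrite <- (exp_ln x) at 1 by lra. apply exp_mono.
  assert (ln x < 0) by (rewrite <- ln_1; apply ln_increasing; lra). nra. Qed.

Lemma RP3 s v : 0 < s < 1 -> 0 <= v -> 1 <= Rpower s (- (1 / 2) - v).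
Proof. intros Hs Hv. unfold Rpower. apply Rle_trans with (exp 0); [rewrite exp_0; lra|]. apply exp_mono.
  assert (ln s < 0) by (rewrite <- ln_1; apply ln_increasing; lra).
  assert (0 <= (1 / 2 + v) * (- ln s)) by (apply Rmult_le_pos; lra).
  replace ((- (1 / 2) - v) * ln s) with ((1 / 2 + v) * (- ln s)) by ring. lra. Qed.

Lemma RP4 s v : 1 <= s -> 0 <= v -> Rpower s (- (1 / 2) - v) <= 1.
Proof. intros Hs Hv. unfold Rpower. apply Rle_trans with (exp 0); [|rewrite exp_0; lra]. apply exp_mono.
  pose proof (ln_le' 1 s ltac:(lra) Hs). rewrite ln_1 in H.
  assert (0 <= (1 / 2 + v) * ln s) by (apply Rmult_le_pos; lra).
  replace ((- (1 / 2) - v) * ln s) with (- ((1 / 2 + v) * ln s)) by ring. lra. Qed.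

Lemma sqrt_exp s : 0 < s -> sqrt s = exp (/ 2 * ln s).
Proof. intros Hs. rewrite <- Rpower_sqrt by auto. reflexivity. Qed.

Lemma RP5 s u v : 1 <= s -> s <= u -> 0 <= v -> / sqrt s <= Rpower s (- (1 / 2) - v) * Rpower u v.
Proof. intros Hs Hu Hv. rewrite sqrt_exp by lra. rewrite <- exp_Ropp. unfold Rpower. rewrite <- exp_plus.
  apply exp_mono. pose proof (ln_le' s u ltac:(lra) Hu). nra. Qed.

Lemma RP6 s u v : 1 <= s -> 0 < u < s -> 0 <= v <= 1 -> u / (s * sqrt s) <= Rpower s (- (1 / 2) - v) * Rpower u v.
Proof. intros Hs Hu Hv. rewrite sqrt_exp by lra.
  replace (u / (s * exp (/ 2 * ln s))) with (exp (ln u + - (ln s + / 2 * ln s))).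
  2:{ rewrite exp_plus, exp_Ropp, exp_plus, !exp_ln by lra. field. split. apply Rgt_not_eq, exp_pos. lra. }
  unfold Rpower. rewrite <- exp_plus. apply exp_mono.
  pose proof (ln_le' u s ltac:(lra) ltac:(lra)). nra. Qed.

Theorem mainTheorem12 (A B T : R) (HT : 0 < T) :
  exists C : R, exists N0 : nat,
    forall N : nat, (N0 <= N)%nat -> (1 <= N)%nat ->
    forall s t : R, 0 <= s -> s < t -> t <= INR N ^ 2 * T ->
    forall x y : nat, (x <= N)%nat -> (y <= N)%nat ->
    forall v : R, 0 <= v <= 1 ->
      Rabs (pR A B N t x y - pR A B N s x y) <= C * minfac s v * Rpower (t - s) v.
Proof.
  destruct (row_bounds A B T HT) as [C0 [C1 [CP [CD [N2 [H0 [H1 [H2 [H3 HB]]]]]]]]].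
  exists (2 * C0 + C1 + 2 * CP + CD), N2.
  intros N HN HN1 s t Hs Hst HtT x y Hx Hy v Hv.
  destruct (HB N HN x y Hx Hy) as [Hall Hlarge].
  set (C := 2 * C0 + C1 + 2 * CP + CD).
  set (p := fun r => pR A B N r x y).
  set (d := fun r => / 2 * Mv N (Delta A B N) (fun z => pR A B N r x z) y).
  assert (Hd: forall r, is_derive p r (d r)) by (intros r; apply (row_sol A B N x y r Hy)).
  destruct (mvt p d s t Hst) as [xi [Hxi Hmvt]]. { intros c _; apply Hd. }
  change (pR A B N t x y - pR A B N s x y) with (p t - p s). rewrite Hmvt.
  assert (HR0: 0 < Rpower (t - s) v) by (unfold Rpower; apply exp_pos).
  set (R := Rpower (t - s) v) in *.
  assert (Hts: 0 < t - s) by lra.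
  rewrite Rabs_mult, (Rabs_right (t - s)) by lra.
  assert (Hp: forall r, 0 <= r <= INR N ^ 2 * T -> Rabs (p r) <= C0) by (intros r Hr; apply (Hall r Hr)).
  assert (Hdb: forall r, 0 <= r <= INR N ^ 2 * T -> Rabs (d r) <= C1) by (intros r Hr; apply (Hall r Hr)).
  assert (Hdiff: Rabs (d xi) * (t - s) = Rabs (p t - p s)) by (rewrite Hmvt, Rabs_mult, (Rabs_right (t - s)); lra).
  destruct (Rlt_le_dec s 1) as [Hs1|Hs1].
  - assert (Hm: minfac s v = 1).
    { unfold minfac. destruct (Req_EM_T s 0); auto. apply Rmin_left. apply RP3; lra. }
    rewrite Hm, Rmult_1_r.
    destruct (Rlt_le_dec (t - s) 1) as [Hu|Hu].
    + assert (t - s <= R) by (apply RP2; lra).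
      assert (Rabs (d xi) <= C1) by (apply Hdb; lra).
      assert (Rabs (d xi) * (t - s) <= C1 * R) by (apply Rmult_le_compat; auto using Rabs_pos; lra).
      assert (C1 * R <= C * R) by (apply Rmult_le_compat_r; unfold C; lra). lra.
    + assert (1 <= R) by (apply RP1; lra).
      rewrite Hdiff. pose proof (Rabs_triang (p t) (- p s)) as Htri. rewrite Rabs_Ropp in Htri.
      assert (Rabs (p t) <= C0) by (apply Hp; lra). assert (Rabs (p s) <= C0) by (apply Hp; lra).
      assert (2 * C0 <= C * R). { apply Rle_trans with (C * 1). unfold C; lra. apply Rmult_le_compat_l; unfold C; lra. }
      unfold Rminus. lra.
  - assert (Hs0: s <> 0) by lra.
    assert (HP: Rpower s (- (1 / 2) - v) <= 1) by (apply RP4; lra).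
    assert (Hm: minfac s v = Rpower s (- (1 / 2) - v)).
    { unfold minfac. destruct (Req_EM_T s 0); [lra|]. apply Rmin_right. auto. }
    rewrite Hm. set (P := Rpower s (- (1 / 2) - v)) in *.
    assert (HP0: 0 < P) by (unfold P, Rpower; apply exp_pos).
    assert (Hsq: 0 < sqrt s) by (apply sqrt_lt_R0; lra).
    destruct (Rlt_le_dec (t - s) s) as [Hu|Hu].
    + assert (Hd1: Rabs (d xi) <= CD / (xi * sqrt xi)) by (apply (Hlarge xi); lra).
      assert (CD / (xi * sqrt xi) <= CD / (s * sqrt s)).
      { unfold Rdiv. apply Rmult_le_compat_l; auto. apply Rinv_le_contravar. nra.
        apply Rmult_le_compat; try lra. apply sqrt_le_1_alt; lra. }
      assert (Rabs (d xi) * (t - s) <= CD * ((t - s) / (s * sqrt s))).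
      { replace (CD * ((t - s) / (s * sqrt s))) with (CD / (s * sqrt s) * (t - s)) by (field; lra).
        apply Rmult_le_compat_r; lra. }
      pose proof (RP6 s (t - s) v Hs1 ltac:(lra) Hv) as H5. fold P R in H5.
      assert (CD * ((t - s) / (s * sqrt s)) <= CD * (P * R)) by (apply Rmult_le_compat_l; auto).
      assert (CD * (P * R) <= C * P * R). { rewrite Rmult_assoc. apply Rmult_le_compat_r. nra. unfold C; lra. }
      lra.
    + rewrite Hdiff. pose proof (Rabs_triang (p t) (- p s)) as Htri. rewrite Rabs_Ropp in Htri.
      assert (Rabs (p t) <= CP / sqrt t) by (apply (Hlarge t); lra).
      assert (Rabs (p s) <= CP / sqrt s) by (apply (Hlarge s); lra).
      assert (CP / sqrt t <= CP / sqrt s).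
      { unfold Rdiv. apply Rmult_le_compat_l; auto. apply Rinv_le_contravar; auto. apply sqrt_le_1_alt; lra. }
      pose proof (RP5 s (t - s) v Hs1 Hu ltac:(lra)) as H7. fold P R in H7.
      assert (2 * (CP / sqrt s) <= 2 * CP * (P * R)).
      { unfold Rdiv. rewrite Rmult_assoc. apply Rmult_le_compat_l; [lra|]. apply Rmult_le_compat_l; auto. }
      assert (2 * CP * (P * R) <= C * P * R). { rewrite (Rmult_assoc C). apply Rmult_le_compat_r. nra. unfold C; lra. }
      unfold Rminus. lra.
Qed.
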